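(* Call a germ $f:(\mathbb{R}^2,0)\to(\mathbb{R}^3,0)$ of normal form with data $(a,b,c)$ if $$f(u,v)=\big(u^2-v^2,\ a(u^2+v^2)+b(u,v),\ c(u,v)\big),$$ $b(u,v)=u^3b_1(u)+u^2v^2b_2(u,v)+v^3b_3(v)$, $c(u,v)=u^3c_1(u)+u^2v^2c_2(u,v)+v^3c_3(v)$, with $b_1,b_3,c_1,c_3$ smooth germs of one variable, $b_2,c_2$ smooth germs of two variables, and $a>0$, $c_1(0)>0$, $c_3(0)>0$. Let $f$ and $\hat f$ be of normal form with data $(a,b,c)$ and $(\hat a,\hat b,\hat c)$ respectively (all quantities with hats defined analogously). Let $s$ be a germ of an orientation-preserving diffeomorphism of $(\mathbb{R}^2,0)$ and $A\in SO(3)$. (i) If the $3$-jets at $0$ of $A\circ f\circ s^{-1}$ and of $\hat f$ coincide, then $a=\hat a$, $b_1(0)=\hat b_1(0)$, $b_3(0)=\hat b_3(0)$, $c_1(0)=\hat c_1(0)$ and $c_3(0)=\hat c_3(0)$; equivalently the $3$-jets of $f$ and $\hat f$ at $0$ coincide. (ii) If $A\circ f\circ s^{-1}=f$ as germs, then $A$ is the identity and, for every $r\ge1$, the $r$-jet of $s$ at $0$ equals the $r$-jet of the identity map. *)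

(* Defs.v *)
From Stdlib Require Import Reals List.
From Coquelicot Require Import Coquelicot.
Open Scope R_scope.

(** Points of R^2 are pairs (u,v). Partial derivative in direction d
    (true = d/du, false = d/dv). *)
Definition pD (d : bool) (g : R * R -> R) : R * R -> R :=
  fun p => if d then Derive (fun x => g (x, snd p)) (fst p)
           else Derive (fun y => g (fst p, y)) (snd p).

Definition pDs (ds : list bool) (g : R * R -> R) : R * R -> R :=
  fold_right pD g ds.

Definition near0 (eps : R) (p : R * R) : Prop :=
  Rabs (fst p) < eps /\ Rabs (snd p) < eps.

Definition smooth2 (g : R * R -> R) : Prop :=
  exists eps, 0 < eps /\
    forall (ds : list bool) (p : R * R), near0 eps p ->
      ex_derive (fun x => pDs ds g (x, snd p)) (fst p) /\
      ex_derive (fun y => pDs ds g (fst p, y)) (snd p) /\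
      continuous (pDs ds g) p.

Definition smooth1 (g : R -> R) : Prop :=
  exists eps, 0 < eps /\
    forall (n : nat) (x : R), Rabs x < eps -> ex_derive (Derive_n g n) x.

Definition jet_eq (r : nat) (g h : R * R -> R) : Prop :=
  forall ds : list bool, (length ds <= r)%nat -> pDs ds g (0, 0) = pDs ds h (0, 0).

Definition germ_eq (g h : R * R -> R) : Prop :=
  exists eps, 0 < eps /\ forall p, near0 eps p -> g p = h p.

(** Maps R^2 -> R^3, given by their components indexed by 0,1,2. *)
Definition map3 := nat -> R * R -> R.

Definition jet_eq3 (r : nat) (F G : map3) : Prop :=
  forall i, (i < 3)%nat -> jet_eq r (F i) (G i).

Definition germ_eq3 (F G : map3) : Prop :=
  forall i, (i < 3)%nat -> germ_eq (F i) (G i).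

(** 3x3 real matrices, entries indexed by 0,1,2. *)
Definition mat3 := nat -> nat -> R.

Definition mact (A : mat3) (F : map3) : map3 :=
  fun i p => A i 0%nat * F 0%nat p + A i 1%nat * F 1%nat p + A i 2%nat * F 2%nat p.

Definition det3 (A : mat3) : R :=
  A 0%nat 0%nat * (A 1%nat 1%nat * A 2%nat 2%nat - A 1%nat 2%nat * A 2%nat 1%nat)
  - A 0%nat 1%nat * (A 1%nat 0%nat * A 2%nat 2%nat - A 1%nat 2%nat * A 2%nat 0%nat)
  + A 0%nat 2%nat * (A 1%nat 0%nat * A 2%nat 1%nat - A 1%nat 1%nat * A 2%nat 0%nat).

Definition kron (i j : nat) : R := if Nat.eqb i j then 1 else 0.

Definition SO3 (A : mat3) : Prop :=
  (forall i j, (i < 3)%nat -> (j < 3)%nat ->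
     A 0%nat i * A 0%nat j + A 1%nat i * A 1%nat j + A 2%nat i * A 2%nat j = kron i j)
  /\ det3 A = 1.

Definition is_id3 (A : mat3) : Prop :=
  forall i j, (i < 3)%nat -> (j < 3)%nat -> A i j = kron i j.

Definition comp3 (F : map3) (t : R * R -> R * R) : map3 := fun i p => F i (t p).

Definition nf (a : R) (b1 : R -> R) (b2 : R * R -> R) (b3 : R -> R)
  (c1 : R -> R) (c2 : R * R -> R) (c3 : R -> R) : map3 :=
  fun i p =>
    let u := fst p in let v := snd p in
    match i with
    | 0%nat => u ^ 2 - v ^ 2
    | 1%nat => a * (u ^ 2 + v ^ 2)
               + (u ^ 3 * b1 u + u ^ 2 * v ^ 2 * b2 p + v ^ 3 * b3 v)
    | _ => u ^ 3 * c1 u + u ^ 2 * v ^ 2 * c2 p + v ^ 3 * c3 v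
    end.

Definition nf_data (a : R) (b1 : R -> R) (b2 : R * R -> R) (b3 : R -> R)
  (c1 : R -> R) (c2 : R * R -> R) (c3 : R -> R) : Prop :=
  smooth1 b1 /\ smooth1 b3 /\ smooth1 c1 /\ smooth1 c3 /\
  smooth2 b2 /\ smooth2 c2 /\
  0 < a /\ 0 < c1 0 /\ 0 < c3 0.

Definition diffeo_germ (s t : R * R -> R * R) : Prop :=
  s (0, 0) = (0, 0) /\
  smooth2 (fun p => fst (s p)) /\ smooth2 (fun p => snd (s p)) /\
  smooth2 (fun p => fst (t p)) /\ smooth2 (fun p => snd (t p)) /\
  exists eps, 0 < eps /\ forall p, near0 eps p -> t (s p) = p /\ s (t p) = p.

Definition orientation_preserving (s : R * R -> R * R) : Prop :=
  let s1 := fun p => fst (s p) in let s2 := fun p => snd (s p) in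
  pD true s1 (0, 0) * pD false s2 (0, 0) - pD false s1 (0, 0) * pD true s2 (0, 0) > 0.

(* Main.v *)
Require Import Defs.
From Stdlib Require Import Reals List Lra Lia Psatz Permutation FunctionalExtensionality.
From Coquelicot Require Import Coquelicot.
Open Scope R_scope.

Ltac rabs := repeat match goal with
  | H : Rabs _ < _ |- _ => apply Rabs_def2 in H; destruct H
  | |- Rabs _ < _ => apply Rabs_def1 end.

Lemma ball_R (x y : R) (r : R) : ball x r y -> Rabs (y - x) < r.
Proof. unfold ball; simpl; unfold AbsRing_ball, abs, minus, plus, opp; simpl. auto. Qed.

Lemma ball_R' (x y : R) (r : R) : Rabs (y - x) < r -> ball x r y.
Proof. unfold ball; simpl; unfold AbsRing_ball, abs, minus, plus, opp; simpl. auto. Qed.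

Lemma rabs_shift x y r : Rabs (y - x) < r - Rabs x -> Rabs y < r.
Proof. intros H. pose proof (Rabs_triang (y - x) x). replace (y - x + x) with y in H0 by ring. lra. Qed.

Lemma near0_loc1 e p : near0 e p -> locally (fst p) (fun x => near0 e (x, snd p)).
Proof.
  intros [H1 H2]. assert (Hr : 0 < e - Rabs (fst p)) by lra.
  exists (mkposreal _ Hr). intros y Hy. apply ball_R in Hy. simpl in Hy.
  split; simpl; auto; eapply rabs_shift; eauto.
Qed.

Lemma near0_loc2 e p : near0 e p -> locally (snd p) (fun y => near0 e (fst p, y)).
Proof.
  intros [H1 H2]. assert (Hr : 0 < e - Rabs (snd p)) by lra.
  exists (mkposreal _ Hr). intros y Hy. apply ball_R in Hy. simpl in Hy.
  split; simpl; auto; eapply rabs_shift; eauto.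
Qed.

Lemma near0_loc e p : near0 e p -> locally p (near0 e).
Proof.
  intros [H1 H2].
  assert (Hr : 0 < Rmin (e - Rabs (fst p)) (e - Rabs (snd p))).
  { apply Rmin_pos; lra. }
  exists (mkposreal _ Hr). intros q [Hq1 Hq2]. apply ball_R in Hq1. apply ball_R in Hq2.
  simpl in *. pose proof (Rmin_l (e - Rabs (fst p)) (e - Rabs (snd p))).
  pose proof (Rmin_r (e - Rabs (fst p)) (e - Rabs (snd p))).
  split; [apply rabs_shift with (x := fst p) | apply rabs_shift with (x := snd p)]; lra.
Qed.

Lemma near0_0 e : 0 < e -> near0 e (0,0).
Proof. intros. split; simpl; rewrite Rabs_R0; auto. Qed.

Lemma near0_mono e e' p : e <= e' -> near0 e p -> near0 e' p.
Proof. intros H [H1 H2]; split; lra. Qed.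

Definition onB (e : R) (g h : R * R -> R) := forall p, near0 e p -> g p = h p.

Lemma pD_ext e d g h : onB e g h -> onB e (pD d g) (pD d h).
Proof.
  intros H p Hp. unfold pD. destruct d.
  - apply Derive_ext_loc. generalize (near0_loc1 e p Hp).
    apply filter_imp. intros x Hx. apply H; auto.
  - apply Derive_ext_loc. generalize (near0_loc2 e p Hp).
    apply filter_imp. intros x Hx. apply H; auto.
Qed.

Lemma pDs_ext e ds g h : onB e g h -> onB e (pDs ds g) (pDs ds h).
Proof.
  induction ds; simpl; intros H; auto. apply pD_ext. auto.
Qed.

Lemma pDs_app ds d g : pDs (ds ++ d :: nil) g = pDs ds (pD d g).
Proof. unfold pDs. rewrite fold_right_app. reflexivity. Qed.

Definition Sm (e : R) (g : R * R -> R) : Prop :=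
  forall (ds : list bool) (p : R * R), near0 e p ->
      ex_derive (fun x => pDs ds g (x, snd p)) (fst p) /\
      ex_derive (fun y => pDs ds g (fst p, y)) (snd p) /\
      continuous (pDs ds g) p.

Lemma Sm_mono e e' g : e' <= e -> Sm e g -> Sm e' g.
Proof. intros He H ds p Hp. apply H. eapply near0_mono; eauto. Qed.

Lemma Sm_pD e d g : Sm e g -> Sm e (pD d g).
Proof. intros H ds p Hp. rewrite <- pDs_app. apply H; auto. Qed.

Lemma Sm_pDs e ds g : Sm e g -> Sm e (pDs ds g).
Proof. induction ds; simpl; auto. intros. apply Sm_pD; auto. Qed.

Fixpoint Dn (e : R) (n : nat) (g : R * R -> R) : Prop :=
  (forall p, near0 e p -> continuous g p) /\
  match n with
  | O => True
  | S m => (forall p, near0 e p -> ex_derive (fun x => g (x, snd p)) (fst p) /\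
                                   ex_derive (fun y => g (fst p, y)) (snd p)) /\
           Dn e m (pD true g) /\ Dn e m (pD false g)
  end.

Lemma Sm_Dn e g : Sm e g -> forall n, Dn e n g.
Proof.
  intros H n; revert g H; induction n; intros g H; simpl.
  - split; auto. intros p Hp. apply (H nil p Hp).
  - split; [intros p Hp; apply (H nil p Hp)|].
    split; [intros p Hp; split; apply (H nil p Hp)|].
    split; apply IHn; apply Sm_pD; auto.
Qed.

Lemma Dn_pDs e ds : forall k g, Dn e (length ds + k) g -> Dn e k (pDs ds g).
Proof.
  induction ds; intros k g H; [exact H|].
  change (length (a :: ds) + k)%nat with (S (length ds + k)) in H.
  replace (S (length ds + k)) with (length ds + S k)%nat in H by lia.
  apply IHds in H. change (pDs (a :: ds) g) with (pD a (pDs ds g)). destruct H as [_ [_ [H1 H2]]]. destruct a; auto.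
Qed.

Lemma Dn_Sm e g : (forall n, Dn e n g) -> Sm e g.
Proof.
  intros H ds p Hp. pose proof (Dn_pDs e ds 1 g (H _)) as [Hc [Hd _]].
  destruct (Hd p Hp). auto.
Qed.

Lemma Dn_mono e n g : Dn e (S n) g -> Dn e n g.
Proof.
  revert g; induction n; intros g H.
  - destruct H as [Hc _]. split; auto.
  - destruct H as [Hc [Hd [H1 H2]]]. split; [auto|split; [auto|split; apply IHn; auto]].
Qed.

Lemma continuous_ext_onB e g h p : onB e g h -> near0 e p -> continuous g p -> continuous h p.
Proof.
  intros H Hp Hc. apply continuous_ext_loc with g; auto.
  generalize (near0_loc e p Hp). apply filter_imp. intros q Hq. auto.
Qed.

Lemma Dn_ext e n : forall g h, onB e g h -> Dn e n g -> Dn e n h.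
Proof.
  induction n; intros g h Hgh H; simpl in *.
  - split; auto. intros p Hp. eapply continuous_ext_onB; eauto. apply H; auto.
  - destruct H as [Hc [Hd [H1 H2]]]. split; [|split; [|split]].
    + intros p Hp. eapply continuous_ext_onB; eauto.
    + intros p Hp. destruct (Hd p Hp) as [Hx Hy]. split.
      * eapply ex_derive_ext_loc; [|apply Hx].
        generalize (near0_loc1 e p Hp). apply filter_imp. intros x Hx'. apply Hgh; auto.
      * eapply ex_derive_ext_loc; [|apply Hy].
        generalize (near0_loc2 e p Hp). apply filter_imp. intros x Hx'. apply Hgh; auto.
    + eapply IHn; [|apply H1]. apply pD_ext; auto.
    + eapply IHn; [|apply H2]. apply pD_ext; auto.
Qed.

Lemma Sm_ext e g h : onB e g h -> Sm e g -> Sm e h.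
Proof. intros. apply Dn_Sm. intros n. eapply Dn_ext; eauto. apply Sm_Dn; auto. Qed.

Lemma pD_const d c : pD d (fun _ => c) = fun _ => 0.
Proof. apply functional_extensionality; intros p; unfold pD; destruct d; apply Derive_const. Qed.

Lemma pD_fst_t : pD true fst = fun _ => 1.
Proof. apply functional_extensionality; intros p; unfold pD; simpl. apply Derive_id. Qed.
Lemma pD_fst_f : pD false fst = fun _ => 0.
Proof. apply functional_extensionality; intros p; unfold pD; simpl. apply Derive_const. Qed.
Lemma pD_snd_t : pD true snd = fun _ => 0.
Proof. apply functional_extensionality; intros p; unfold pD; simpl. apply Derive_const. Qed.
Lemma pD_snd_f : pD false snd = fun _ => 1.
Proof. apply functional_extensionality; intros p; unfold pD; simpl. apply Derive_id. Qed.

Lemma pD_scal d c g : pD d (fun p => c * g p) = fun p => c * pD d g p.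
Proof. apply functional_extensionality; intros p; unfold pD; destruct d; apply Derive_scal. Qed.

Lemma Dn_ex e n g : Dn e (S n) g -> forall p, near0 e p ->
  ex_derive (fun x => g (x, snd p)) (fst p) /\ ex_derive (fun y => g (fst p, y)) (snd p).
Proof. intros [_ [H _]]. auto. Qed.
Lemma Dn_cont e n g : Dn e n g -> forall p, near0 e p -> continuous g p.
Proof. intros H; destruct n; apply H. Qed.
Lemma Dn_pD e n d g : Dn e (S n) g -> Dn e n (pD d g).
Proof. intros [_ [_ [H1 H2]]]. destruct d; auto. Qed.
Lemma Dn_intro e n g : (forall p, near0 e p -> continuous g p) ->
  (forall p, near0 e p -> ex_derive (fun x => g (x, snd p)) (fst p) /\ ex_derive (fun y => g (fst p, y)) (snd p)) ->
  (forall d, Dn e n (pD d g)) -> Dn e (S n) g.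
Proof. intros H1 H2 H3. exact (conj H1 (conj H2 (conj (H3 true) (H3 false)))). Qed.

Lemma Dn_const e n c : Dn e n (fun _ => c).
Proof.
  revert c; induction n; intros c.
  - split; auto. intros; apply continuous_const.
  - apply Dn_intro.
    + intros; apply continuous_const.
    + intros; split; apply ex_derive_const.
    + intros d. rewrite pD_const. apply IHn.
Qed.

Lemma Dn_fst e n : Dn e n fst.
Proof.
  destruct n.
  - split; auto. intros [x y] _; apply continuous_fst.
  - apply Dn_intro.
    + intros [x y] _; apply continuous_fst.
    + intros p _; simpl; split; [apply ex_derive_id | apply ex_derive_const].
    + intros [|]; [rewrite pD_fst_t | rewrite pD_fst_f]; apply Dn_const.
Qed.

Lemma Dn_snd e n : Dn e n snd.
Proof.
  destruct n.
  - split; auto. intros [x y] _; apply continuous_snd.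
  - apply Dn_intro.
    + intros [x y] _; apply continuous_snd.
    + intros p _; simpl; split; [apply ex_derive_const | apply ex_derive_id].
    + intros [|]; [rewrite pD_snd_t | rewrite pD_snd_f]; apply Dn_const.
Qed.

Lemma pD_plus e d g h p : near0 e p ->
  (ex_derive (fun x => g (x, snd p)) (fst p) /\ ex_derive (fun y => g (fst p, y)) (snd p)) ->
  (ex_derive (fun x => h (x, snd p)) (fst p) /\ ex_derive (fun y => h (fst p, y)) (snd p)) ->
  pD d (fun q => g q + h q) p = pD d g p + pD d h p.
Proof.
  intros _ [Hg1 Hg2] [Hh1 Hh2]. unfold pD; destruct d.
  - apply (Derive_plus (fun x => g (x, snd p)) (fun x => h (x, snd p))); auto.
  - apply (Derive_plus (fun x => g (fst p, x)) (fun x => h (fst p, x))); auto.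
Qed.

Lemma pD_mult e d g h p : near0 e p ->
  (ex_derive (fun x => g (x, snd p)) (fst p) /\ ex_derive (fun y => g (fst p, y)) (snd p)) ->
  (ex_derive (fun x => h (x, snd p)) (fst p) /\ ex_derive (fun y => h (fst p, y)) (snd p)) ->
  pD d (fun q => g q * h q) p = pD d g p * h p + g p * pD d h p.
Proof.
  intros _ [Hg1 Hg2] [Hh1 Hh2]. unfold pD; destruct d.
  - rewrite (Derive_mult (fun x => g (x, snd p)) (fun x => h (x, snd p))); auto.
    destruct p; reflexivity.
  - rewrite (Derive_mult (fun x => g (fst p, x)) (fun x => h (fst p, x))); auto.
    destruct p; reflexivity.
Qed.

Lemma Dn_plus e n : forall g h, Dn e n g -> Dn e n h -> Dn e n (fun p => g p + h p).
Proof.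
  induction n; intros g h Hg Hh.
  - split; auto. intros p Hp. apply (continuous_plus g h); [exact (Dn_cont _ _ _ Hg p Hp)|exact (Dn_cont _ _ _ Hh p Hp)].
  - apply Dn_intro.
    + intros p Hp. apply (continuous_plus g h); [exact (Dn_cont _ _ _ Hg p Hp)|exact (Dn_cont _ _ _ Hh p Hp)].
    + intros p Hp. destruct (Dn_ex _ _ _ Hg p Hp); destruct (Dn_ex _ _ _ Hh p Hp).
      split; [apply (ex_derive_plus (fun x => g (x, snd p)) (fun x => h (x, snd p)))
             | apply (ex_derive_plus (fun x => g (fst p, x)) (fun x => h (fst p, x)))]; assumption.
    + intros d. apply Dn_ext with (fun p => pD d g p + pD d h p).
      * intros p Hp. symmetry. exact (pD_plus e d g h p Hp (Dn_ex _ _ _ Hg p Hp) (Dn_ex _ _ _ Hh p Hp)).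
      * apply IHn; [exact (Dn_pD e n d g Hg) | exact (Dn_pD e n d h Hh)].
Qed.

Lemma Dn_scal e n c : forall g, Dn e n g -> Dn e n (fun p => c * g p).
Proof.
  induction n; intros g Hg.
  - split; auto. intros p Hp. apply (continuous_mult (fun _ => c) g); [apply continuous_const|exact (Dn_cont _ _ _ Hg p Hp)].
  - apply Dn_intro.
    + intros p Hp. apply (continuous_mult (fun _ => c) g); [apply continuous_const|exact (Dn_cont _ _ _ Hg p Hp)].
    + intros p Hp. destruct (Dn_ex _ _ _ Hg p Hp).
      split; apply ex_derive_scal; assumption.
    + intros d. rewrite pD_scal. apply IHn. exact (Dn_pD e n d g Hg).
Qed.

Lemma Dn_mult e n : forall g h, Dn e n g -> Dn e n h -> Dn e n (fun p => g p * h p).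
Proof.
  induction n; intros g h Hg Hh.
  - split; auto. intros p Hp. apply (continuous_mult g h); [exact (Dn_cont _ _ _ Hg p Hp)|exact (Dn_cont _ _ _ Hh p Hp)].
  - apply Dn_intro.
    + intros p Hp. apply (continuous_mult g h); [exact (Dn_cont _ _ _ Hg p Hp)|exact (Dn_cont _ _ _ Hh p Hp)].
    + intros p Hp. destruct (Dn_ex _ _ _ Hg p Hp); destruct (Dn_ex _ _ _ Hh p Hp).
      split; [apply (ex_derive_mult (fun x => g (x, snd p)) (fun x => h (x, snd p)))
             | apply (ex_derive_mult (fun x => g (fst p, x)) (fun x => h (fst p, x)))]; assumption.
    + intros d. apply Dn_ext with (fun p => pD d g p * h p + g p * pD d h p).
      * intros p Hp. symmetry. exact (pD_mult e d g h p Hp (Dn_ex _ _ _ Hg p Hp) (Dn_ex _ _ _ Hh p Hp)).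
      * apply Dn_plus; apply IHn.
        -- exact (Dn_pD e n d g Hg).
        -- exact (Dn_mono e n h Hh).
        -- exact (Dn_mono e n g Hg).
        -- exact (Dn_pD e n d h Hh).
Qed.

Lemma Sm_const e c : Sm e (fun _ => c).
Proof. apply Dn_Sm; intros; apply Dn_const. Qed.
Lemma Sm_fst e : Sm e fst.
Proof. apply Dn_Sm; intros; apply Dn_fst. Qed.
Lemma Sm_snd e : Sm e snd.
Proof. apply Dn_Sm; intros; apply Dn_snd. Qed.
Lemma Sm_plus e g h : Sm e g -> Sm e h -> Sm e (fun p => g p + h p).
Proof. intros; apply Dn_Sm; intros; apply Dn_plus; apply Sm_Dn; auto. Qed.
Lemma Sm_mult e g h : Sm e g -> Sm e h -> Sm e (fun p => g p * h p).
Proof. intros; apply Dn_Sm; intros; apply Dn_mult; apply Sm_Dn; auto. Qed.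
Lemma Sm_scal e c g : Sm e g -> Sm e (fun p => c * g p).
Proof. intros; apply Dn_Sm; intros; apply Dn_scal; apply Sm_Dn; auto. Qed.
Lemma Sm_opp e g : Sm e g -> Sm e (fun p => - g p).
Proof.
  intros H. apply Sm_ext with (fun p => -1 * g p).
  - intros p _; ring.
  - apply Sm_scal; auto.
Qed.
Lemma Sm_minus e g h : Sm e g -> Sm e h -> Sm e (fun p => g p - h p).
Proof.
  intros. apply Sm_ext with (fun p => g p + - h p).
  - intros p _; ring.
  - apply Sm_plus; auto; apply Sm_opp; auto.
Qed.
Lemma Sm_pow e g n : Sm e g -> Sm e (fun p => g p ^ n).
Proof.
  intros H; induction n.
  - exact (Sm_const e 1).
  - exact (Sm_mult e g (fun p => g p ^ n) H IHn).
Qed.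

Lemma cont_pair (g : R * R -> R) x y : continuous g (x, y) ->
  continuous (fun z : R * R => g (fst z, snd z)) (x, y).
Proof.
  intros H. apply continuous_ext with g; auto. intros [a b]; reflexivity.
Qed.

Lemma diff_of_Dn2 e g q : Dn e 2 g -> near0 e q ->
  differentiable_pt_lim (fun u v => g (u, v)) (fst q) (snd q) (pD true g q) (pD false g q).
Proof.
  intros H Hq. destruct q as [x y].
  apply filterdiff_differentiable_pt_lim.
  pose proof (is_derive_filterdiff (fun u v => g (u, v)) x y (fun u v => pD true g (u, v)) (pD false g (x, y))) as K.
  assert (H1 : locally (x, y) (fun u : R * R => is_derive (fun z : R_AbsRing => g (z, snd u)) (fst u) (pD true g (fst u, snd u)))).
  { generalize (near0_loc e _ Hq). apply filter_imp. intros [u v] Huv.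
    destruct (Dn_ex _ _ _ H (u, v) Huv) as [Hx _]. apply Derive_correct in Hx. exact Hx. }
  assert (H2 : is_derive (fun z : R => g (x, z)) y (pD false g (x, y))).
  { destruct (Dn_ex _ _ _ H (x, y) Hq) as [_ Hy]. apply Derive_correct in Hy. exact Hy. }
  assert (H3 : continuous (fun u : R * R => pD true g (fst u, snd u)) (x, y)).
  { apply cont_pair. apply (Dn_cont e 1 (pD true g) (Dn_pD e 1 true g H) (x, y) Hq). }
  specialize (K H1 H2 H3). exact K.
Qed.

Definition t1 (t : R * R -> R * R) : R * R -> R := fun q => fst (t q).
Definition t2 (t : R * R -> R * R) : R * R -> R := fun q => snd (t q).

Definition maps (d e : R) (t : R * R -> R * R) := forall q, near0 d q -> near0 e (t q).

Lemma chain e d g t p (b : bool) : Dn e 2 g -> maps d e t -> near0 d p ->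
  ex_derive (fun x => t1 t (x, snd p)) (fst p) -> ex_derive (fun x => t2 t (x, snd p)) (fst p) ->
  ex_derive (fun y => t1 t (fst p, y)) (snd p) -> ex_derive (fun y => t2 t (fst p, y)) (snd p) ->
  is_derive (fun x => g (t (if b then (x, snd p) else (fst p, x)))) (if b then fst p else snd p)
    (pD true g (t p) * pD b (t1 t) p + pD false g (t p) * pD b (t2 t) p).
Proof.
  intros Hg Hm Hp E1 E2 E3 E4.
  assert (Hd := diff_of_Dn2 e g (t p) Hg (Hm p Hp)).
  destruct p as [x0 y0]. simpl in *.
  apply Derive_correct in E1. apply Derive_correct in E2.
  apply Derive_correct in E3. apply Derive_correct in E4.
  apply is_derive_Reals in E1. apply is_derive_Reals in E2.
  apply is_derive_Reals in E3. apply is_derive_Reals in E4.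
  destruct b.
  - apply is_derive_ext with (fun x => (fun u v => g (u, v)) (t1 t (x, y0)) (t2 t (x, y0))).
    { intros x. unfold t1, t2. simpl. rewrite <- surjective_pairing; reflexivity. }
    apply is_derive_Reals.
    exact (derivable_pt_lim_comp_2d (fun u v => g (u, v)) (fun x => t1 t (x, y0)) (fun x => t2 t (x, y0)) x0 _ _ _ _ Hd E1 E2).
  - apply is_derive_ext with (fun x => (fun u v => g (u, v)) (t1 t (x0, x)) (t2 t (x0, x))).
    { intros x. unfold t1, t2. simpl. rewrite <- surjective_pairing; reflexivity. }
    apply is_derive_Reals.
    exact (derivable_pt_lim_comp_2d (fun u v => g (u, v)) (fun x => t1 t (x0, x)) (fun x => t2 t (x0, x)) y0 _ _ _ _ Hd E3 E4).
Qed.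

Lemma pD_comp_gen e d g t p (b : bool) : Dn e 2 g -> maps d e t -> near0 d p ->
  Dn d 1 (t1 t) -> Dn d 1 (t2 t) ->
  pD b (fun q => g (t q)) p = pD true g (t p) * pD b (t1 t) p + pD false g (t p) * pD b (t2 t) p.
Proof.
  intros Hg Hm Hp H1 H2.
  destruct (Dn_ex _ _ _ H1 p Hp) as [E1 E3]. destruct (Dn_ex _ _ _ H2 p Hp) as [E2 E4].
  pose proof (chain e d g t p b Hg Hm Hp E1 E2 E3 E4) as K.
  apply is_derive_unique in K. rewrite <- K. unfold pD. destruct b; reflexivity.
Qed.

Lemma ex_comp e d g t p : Dn e 2 g -> maps d e t -> near0 d p ->
  Dn d 1 (t1 t) -> Dn d 1 (t2 t) ->
  ex_derive (fun x => g (t (x, snd p))) (fst p) /\ ex_derive (fun y => g (t (fst p, y))) (snd p).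
Proof.
  intros Hg Hm Hp H1 H2.
  destruct (Dn_ex _ _ _ H1 p Hp) as [E1 E3]. destruct (Dn_ex _ _ _ H2 p Hp) as [E2 E4].
  split.
  - eexists. exact (chain e d g t p true Hg Hm Hp E1 E2 E3 E4).
  - eexists. exact (chain e d g t p false Hg Hm Hp E1 E2 E3 E4).
Qed.

Lemma cont_comp e d (g : R * R -> R) (t : R * R -> R * R) (p : R * R) : (forall q, near0 e q -> continuous g q) -> maps d e t -> near0 d p ->
  continuous (t1 t) p -> continuous (t2 t) p -> continuous (fun q => g (t q)) p.
Proof.
  intros Hg Hm Hp C1 C2.
  apply continuous_ext with (fun q => (fun a b => g (a, b)) (t1 t q) (t2 t q)).
  { intros q. unfold t1, t2. rewrite <- surjective_pairing; reflexivity. }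
  apply (continuous_comp_2 (t1 t) (t2 t) (fun a b => g (a, b))); auto.
  unfold t1, t2. assert (K := Hg (t p) (Hm p Hp)). destruct (t p) as [a b]. simpl.
  apply cont_pair. exact K.
Qed.

Lemma Dn_le e n m g : Dn e n g -> (m <= n)%nat -> Dn e m g.
Proof.
  intros H Hle. induction Hle; auto. apply IHHle. exact (Dn_mono e m0 g H).
Qed.

Lemma Dn_comp e d t n : maps d e t -> forall g, Dn e (n + 2) g -> Dn d n (t1 t) -> Dn d n (t2 t) ->
  Dn d n (fun q => g (t q)).
Proof.
  intros Hm. induction n; intros g Hg H1 H2.
  - split; auto. intros p Hp.
    exact (cont_comp e d g t p (Dn_cont _ _ _ Hg) Hm Hp (Dn_cont _ _ _ H1 p Hp) (Dn_cont _ _ _ H2 p Hp)).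
  - assert (Hg2 : Dn e 2 g).
    { apply Dn_le with (S n + 2)%nat; [exact Hg | lia]. }
    assert (H1' : Dn d 1 (t1 t)).
    { apply Dn_le with (S n); [exact H1 | lia]. }
    assert (H2' : Dn d 1 (t2 t)).
    { apply Dn_le with (S n); [exact H2 | lia]. }
    apply Dn_intro.
    + intros p Hp.
      exact (cont_comp e d g t p (Dn_cont _ _ _ Hg) Hm Hp (Dn_cont _ _ _ H1 p Hp) (Dn_cont _ _ _ H2 p Hp)).
    + intros p Hp. exact (ex_comp e d g t p Hg2 Hm Hp H1' H2').
    + intros b. apply Dn_ext with (fun q => pD true g (t q) * pD b (t1 t) q + pD false g (t q) * pD b (t2 t) q).
      { intros q Hq. symmetry. exact (pD_comp_gen e d g t q b Hg2 Hm Hq H1' H2'). }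
      apply Dn_plus; apply Dn_mult.
      * apply IHn; [exact (Dn_pD e (n + 2) true g Hg) | exact (Dn_mono d n _ H1) | exact (Dn_mono d n _ H2)].
      * exact (Dn_pD d n b _ H1).
      * apply IHn; [exact (Dn_pD e (n + 2) false g Hg) | exact (Dn_mono d n _ H1) | exact (Dn_mono d n _ H2)].
      * exact (Dn_pD d n b _ H2).
Qed.

Lemma Sm_comp e d g t : maps d e t -> Sm e g -> Sm d (t1 t) -> Sm d (t2 t) -> Sm d (fun q => g (t q)).
Proof.
  intros Hm Hg H1 H2. apply Dn_Sm. intros n. apply Dn_comp with e; auto; apply Sm_Dn; auto.
Qed.

Lemma pD_comp e d g t p (b : bool) : Sm e g -> maps d e t -> near0 d p -> Sm d (t1 t) -> Sm d (t2 t) ->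
  pD b (fun q => g (t q)) p = pD true g (t p) * pD b (t1 t) p + pD false g (t p) * pD b (t2 t) p.
Proof.
  intros. apply pD_comp_gen with e d; auto; apply Sm_Dn; auto.
Qed.

Lemma pDs_fst_fun (phi : R -> R) ds :
  pDs ds (fun p => phi (fst p)) =
  if forallb (fun b => b) ds then (fun p => Derive_n phi (length ds) (fst p)) else (fun _ => 0).
Proof.
  induction ds as [|b ds IH]; simpl; auto.
  rewrite IH. destruct b; simpl.
  - destruct (forallb (fun b => b) ds).
    + apply functional_extensionality; intros p; unfold pD; simpl. reflexivity.
    + apply pD_const.
  - destruct (forallb (fun b => b) ds).
    + apply functional_extensionality; intros p; unfold pD; simpl. apply Derive_const.
    + apply pD_const.
Qed.

Lemma pDs_snd_fun (phi : R -> R) ds :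
  pDs ds (fun p => phi (snd p)) =
  if forallb negb ds then (fun p => Derive_n phi (length ds) (snd p)) else (fun _ => 0).
Proof.
  induction ds as [|b ds IH]; simpl; auto.
  rewrite IH. destruct b; simpl.
  - destruct (forallb negb ds).
    + apply functional_extensionality; intros p; unfold pD; simpl. apply Derive_const.
    + apply pD_const.
  - destruct (forallb negb ds).
    + apply functional_extensionality; intros p; unfold pD; simpl. reflexivity.
    + apply pD_const.
Qed.

Lemma smooth1_Sm_fst phi : smooth1 phi -> exists e, 0 < e /\ Sm e (fun p => phi (fst p)).
Proof.
  intros [e [He H]]. exists e; split; auto.
  intros ds p [Hp1 Hp2]. rewrite pDs_fst_fun. destruct (forallb (fun b => b) ds).
  - split; [|split].
    + simpl. apply H; auto.
    + simpl. apply ex_derive_const.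
    + destruct p as [x y].
      exact (continuous_comp fst (Derive_n phi (length ds)) (x, y) (continuous_fst x y) (ex_derive_continuous _ _ (H _ _ Hp1))).
  - split; [|split]; [apply ex_derive_const|apply ex_derive_const|apply continuous_const].
Qed.

Lemma smooth1_Sm_snd phi : smooth1 phi -> exists e, 0 < e /\ Sm e (fun p => phi (snd p)).
Proof.
  intros [e [He H]]. exists e; split; auto.
  intros ds p [Hp1 Hp2]. rewrite pDs_snd_fun. destruct (forallb negb ds).
  - split; [|split].
    + simpl. apply ex_derive_const.
    + simpl. apply H; auto.
    + destruct p as [x y].
      exact (continuous_comp snd (Derive_n phi (length ds)) (x, y) (continuous_snd x y) (ex_derive_continuous _ _ (H _ _ Hp2))).
  - split; [|split]; [apply ex_derive_const|apply ex_derive_const|apply continuous_const].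
Qed.

Lemma near0_loc2d e x y : near0 e (x, y) -> locally_2d (fun u v => near0 e (u, v)) x y.
Proof.
  intros [H1 H2]. simpl in *.
  assert (Hr : 0 < Rmin (e - Rabs x) (e - Rabs y)) by (apply Rmin_pos; lra).
  exists (mkposreal _ Hr). intros u v Hu Hv. simpl in *.
  pose proof (Rmin_l (e - Rabs x) (e - Rabs y)). pose proof (Rmin_r (e - Rabs x) (e - Rabs y)).
  split; simpl; [apply rabs_shift with (x := x) | apply rabs_shift with (x := y)]; lra.
Qed.

Lemma cont2d (h : R * R -> R) x y : continuous h (x, y) -> continuity_2d_pt (fun u v => h (u, v)) x y.
Proof.
  intros H. apply continuity_2d_pt_filterlim. apply cont_pair. exact H.
Qed.

Lemma schwarz_Sm e g p : Sm e g -> near0 e p -> pD true (pD false g) p = pD false (pD true g) p.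
Proof.
  intros H Hp. destruct p as [x y].
  pose proof (Schwarz (fun u v => g (u, v)) x y) as K.
  unfold pD; simpl. apply K.
  - generalize (near0_loc2d e x y Hp). intros [del Hd]. exists del. intros u v Hu Hv.
    specialize (Hd u v Hu Hv).
    destruct (H nil (u, v) Hd) as [A1 [A2 _]].
    destruct (H (false :: nil) (u, v) Hd) as [B1 _].
    destruct (H (true :: nil) (u, v) Hd) as [_ [C2 _]].
    simpl in *. unfold pD in *; simpl in *. auto.
  - destruct (H (true :: false :: nil) (x, y) Hp) as [_ [_ Hc]].
    apply cont2d in Hc. exact Hc.
  - destruct (H (false :: true :: nil) (x, y) Hp) as [_ [_ Hc]].
    apply cont2d in Hc. exact Hc.
Qed.

Lemma pDs_perm e g : Sm e g -> forall ds ds', Permutation ds ds' -> onB e (pDs ds g) (pDs ds' g).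
Proof.
  intros H ds ds' P. induction P.
  - intros p _; reflexivity.
  - simpl. apply pD_ext. auto.
  - intros p Hp. simpl. destruct x, y; auto.
    + symmetry. apply (schwarz_Sm e (pDs l g) p (Sm_pDs e l g H) Hp).
    + apply (schwarz_Sm e (pDs l g) p (Sm_pDs e l g H) Hp).
  - intros p Hp. rewrite IHP1; auto.
Qed.

Lemma pDs_plus e g h : Sm e g -> Sm e h -> forall ds,
  onB e (pDs ds (fun p => g p + h p)) (fun p => pDs ds g p + pDs ds h p).
Proof.
  intros Hg Hh ds. induction ds as [|d ds IH]; simpl.
  - intros p _; reflexivity.
  - intros p Hp. rewrite (pD_ext e d _ _ IH p Hp).
    apply pD_plus with e; auto.
    + destruct (Sm_pDs e ds g Hg nil p Hp) as [A [B _]]; auto.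
    + destruct (Sm_pDs e ds h Hh nil p Hp) as [A [B _]]; auto.
Qed.

Lemma pDs_scal c g ds : pDs ds (fun p => c * g p) = fun p => c * pDs ds g p.
Proof.
  induction ds as [|d ds IH]; simpl; auto. rewrite IH. apply pD_scal.
Qed.

Lemma pDs_const c ds : pDs ds (fun _ => c) = match ds with nil => (fun _ => c) | _ => (fun _ => 0) end.
Proof.
  induction ds as [|d ds IH]; simpl; auto. rewrite IH. destruct ds; apply pD_const.
Qed.

Lemma pDs_minus e g h : Sm e g -> Sm e h -> forall ds,
  onB e (pDs ds (fun p => g p - h p)) (fun p => pDs ds g p - pDs ds h p).
Proof.
  intros Hg Hh ds p Hp.
  assert (E : (fun p => g p - h p) = (fun p => g p + (-1) * h p)).
  { apply functional_extensionality; intros; ring. }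
  rewrite E. rewrite (pDs_plus e g (fun p => -1 * h p) Hg (Sm_scal e (-1) h Hh) ds p Hp).
  rewrite pDs_scal. ring.
Qed.

Definition I (k : nat) (g : R * R -> R) : Prop :=
  forall ds, (length ds < k)%nat -> pDs ds g (0, 0) = 0.

Lemma I_0 g : I 0 g.
Proof. intros ds H; lia. Qed.

Lemma I_le k m g : I k g -> (m <= k)%nat -> I m g.
Proof. intros H Hm ds Hl. apply H. lia. Qed.

Lemma I_S_intro k g : g (0, 0) = 0 -> (forall d, I k (pD d g)) -> I (S k) g.
Proof.
  intros H0 H ds Hl. destruct ds as [|d ds'] using rev_ind.
  - exact H0.
  - rewrite pDs_app. apply H. rewrite length_app in Hl. simpl in Hl. lia.
Qed.

Lemma I_S_val k g : I (S k) g -> g (0, 0) = 0.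
Proof. intros H. apply (H nil). simpl; lia. Qed.

Lemma I_S_pD k d g : I (S k) g -> I k (pD d g).
Proof.
  intros H ds Hl. rewrite <- pDs_app. apply H. rewrite length_app; simpl; lia.
Qed.

Lemma I_pred k d g : I k g -> I (k - 1) (pD d g).
Proof.
  intros H. destruct k.
  - apply I_0.
  - replace (S k - 1)%nat with k by lia. apply I_S_pD; auto.
Qed.

Lemma I_ext e k g h : 0 < e -> onB e g h -> I k g -> I k h.
Proof.
  intros He Hgh H ds Hl. rewrite <- (pDs_ext e ds g h Hgh (0,0) (near0_0 e He)). apply H; auto.
Qed.

Lemma I_zero e k g : 0 < e -> onB e g (fun _ => 0) -> I k g.
Proof.
  intros He H. apply I_ext with e (fun _ => 0); auto.
  - intros p Hp; symmetry; auto.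
  - intros ds Hl. rewrite pDs_const. destruct ds; auto.
Qed.

Lemma I_plus e k g h : 0 < e -> Sm e g -> Sm e h -> I k g -> I k h -> I k (fun p => g p + h p).
Proof.
  intros He Hg Hh H1 H2 ds Hl. rewrite (pDs_plus e g h Hg Hh ds (0,0) (near0_0 e He)).
  rewrite H1, H2; auto. ring.
Qed.

Lemma I_scal k c g : I k g -> I k (fun p => c * g p).
Proof. intros H ds Hl. rewrite pDs_scal. rewrite H; auto. ring. Qed.

Lemma I_minus e k g h : 0 < e -> Sm e g -> Sm e h -> I k g -> I k h -> I k (fun p => g p - h p).
Proof.
  intros He Hg Hh H1 H2 ds Hl. rewrite (pDs_minus e g h Hg Hh ds (0,0) (near0_0 e He)).
  rewrite H1, H2; auto. ring.
Qed.

Lemma I_opp k g : I k g -> I k (fun p => - g p).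
Proof.
  intros H. assert (E : (fun p => - g p) = (fun p => -1 * g p)).
  { apply functional_extensionality; intros; ring. }
  rewrite E. apply I_scal; auto.
Qed.

Lemma I_mult e : 0 < e -> forall m g h j k, Sm e g -> Sm e h -> I j g -> I k h -> (m <= j + k)%nat ->
  I m (fun p => g p * h p).
Proof.
  intros He m. induction m; intros g h j k Hg Hh H1 H2 Hm.
  - apply I_0.
  - apply I_S_intro.
    + destruct j.
      * destruct k; [lia|]. rewrite (I_S_val k h H2). ring.
      * rewrite (I_S_val j g H1). ring.
    + intros d. apply I_ext with e (fun p => pD d g p * h p + g p * pD d h p); auto.
      { intros p Hp. symmetry. apply pD_mult with e; auto.
        - destruct (Hg nil p Hp) as [A [B _]]; auto.
        - destruct (Hh nil p Hp) as [A [B _]]; auto. }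
      apply I_plus with e; auto.
      * apply Sm_mult; auto; apply Sm_pD; auto.
      * apply Sm_mult; auto; apply Sm_pD; auto.
      * apply IHm with (j - 1)%nat k; auto; [apply Sm_pD; auto | apply I_pred; auto | lia].
      * apply IHm with j (k - 1)%nat; auto; [apply Sm_pD; auto | apply I_pred; auto | lia].
Qed.

Lemma I_comp0 e d t : 0 < d -> maps d e t -> Sm d (t1 t) -> Sm d (t2 t) -> t (0, 0) = (0, 0) ->
  forall j g, Sm e g -> I j g -> I j (fun q => g (t q)).
Proof.
  intros Hd Hm H1 H2 H0 j. induction j; intros g Hg Hj.
  - apply I_0.
  - apply I_S_intro.
    + rewrite H0. apply (I_S_val j g Hj).
    + intros b. apply I_ext with d (fun q => pD true g (t q) * pD b (t1 t) q + pD false g (t q) * pD b (t2 t) q); auto.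
      { intros q Hq. symmetry. apply pD_comp with e d; auto. }
      assert (Sm d (fun q => pD true g (t q))) by (apply Sm_comp with e; auto; apply Sm_pD; auto).
      assert (Sm d (fun q => pD false g (t q))) by (apply Sm_comp with e; auto; apply Sm_pD; auto).
      apply I_plus with d; auto.
      * apply Sm_mult; auto; apply Sm_pD; auto.
      * apply Sm_mult; auto; apply Sm_pD; auto.
      * apply I_mult with d j 0%nat; auto; [apply Sm_pD; auto | apply IHj; [apply Sm_pD; auto | apply I_S_pD; auto] | apply I_0 | lia].
      * apply I_mult with d j 0%nat; auto; [apply Sm_pD; auto | apply IHj; [apply Sm_pD; auto | apply I_S_pD; auto] | apply I_0 | lia].
Qed.

Lemma pD_minus e d g h p : Sm e g -> Sm e h -> near0 e p ->
  pD d (fun q => g q - h q) p = pD d g p - pD d h p.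
Proof.
  intros Hg Hh Hp. pose proof (pDs_minus e g h Hg Hh (d :: nil) p Hp). simpl in H. exact H.
Qed.

Lemma I_pD_minus e k d g h : 0 < e -> Sm e g -> Sm e h -> I k (fun q => g q - h q) ->
  I (k - 1) (fun q => pD d g q - pD d h q).
Proof.
  intros He Hg Hh H. apply I_ext with e (pD d (fun q => g q - h q)); auto.
  - intros q Hq. apply pD_minus with e; auto.
  - apply I_pred; auto.
Qed.

Lemma I_compdiff e d t t' : 0 < d -> maps d e t -> maps d e t' ->
  Sm d (t1 t) -> Sm d (t2 t) -> Sm d (t1 t') -> Sm d (t2 t') ->
  t (0, 0) = (0, 0) -> t' (0, 0) = (0, 0) ->
  forall k, (1 <= k)%nat -> I k (fun q => t1 t q - t1 t' q) -> I k (fun q => t2 t q - t2 t' q) ->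
  forall m g j, Sm e g -> I j g -> (m <= j + k - 1)%nat ->
  I m (fun q => g (t q) - g (t' q)).
Proof.
  intros Hd Hm Hm' A1 A2 B1 B2 H0 H0' k Hk K1 K2 m. induction m; intros g j Hg Hj Hmj.
  - apply I_0.
  - assert (Sg : forall h, Sm e h -> Sm d (fun q => h (t q))) by (intros; apply Sm_comp with e; auto).
    assert (Sg' : forall h, Sm e h -> Sm d (fun q => h (t' q))) by (intros; apply Sm_comp with e; auto).
    apply I_S_intro.
    + rewrite H0, H0'. ring.
    + intros b.
      apply I_ext with d (fun q =>
        ((pD true g (t q) - pD true g (t' q)) * pD b (t1 t) q + pD true g (t' q) * (pD b (t1 t) q - pD b (t1 t') q)) +
        ((pD false g (t q) - pD false g (t' q)) * pD b (t2 t) q + pD false g (t' q) * (pD b (t2 t) q - pD b (t2 t') q))); auto.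
      { intros q Hq. rewrite (pD_minus d b _ _ q (Sg g Hg) (Sg' g Hg) Hq).
        rewrite (pD_comp e d g t q b Hg Hm Hq A1 A2).
        rewrite (pD_comp e d g t' q b Hg Hm' Hq B1 B2). ring. }
      assert (Su : Sm e (pD true g)) by (apply Sm_pD; auto).
      assert (Sv : Sm e (pD false g)) by (apply Sm_pD; auto).
      assert (Sa1 := Sm_pD d b _ A1). assert (Sa2 := Sm_pD d b _ A2).
      assert (Sb1 := Sm_pD d b _ B1). assert (Sb2 := Sm_pD d b _ B2).
      assert (SD1 : Sm d (fun q => pD true g (t q) - pD true g (t' q))) by (apply Sm_minus; auto).
      assert (SD2 : Sm d (fun q => pD false g (t q) - pD false g (t' q))) by (apply Sm_minus; auto).
      assert (SE1 : Sm d (fun q => pD b (t1 t) q - pD b (t1 t') q)) by (apply Sm_minus; auto).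
      assert (SE2 : Sm d (fun q => pD b (t2 t) q - pD b (t2 t') q)) by (apply Sm_minus; auto).
      assert (IE1 : I (k - 1) (fun q => pD b (t1 t) q - pD b (t1 t') q)) by (apply I_pD_minus with d; auto).
      assert (IE2 : I (k - 1) (fun q => pD b (t2 t) q - pD b (t2 t') q)) by (apply I_pD_minus with d; auto).
      assert (IG1 : I (j - 1) (fun q => pD true g (t' q))).
      { apply I_comp0 with e d; auto. apply I_pred; auto. }
      assert (IG2 : I (j - 1) (fun q => pD false g (t' q))).
      { apply I_comp0 with e d; auto. apply I_pred; auto. }
      assert (ID1 : I m (fun q => pD true g (t q) - pD true g (t' q))).
      { apply IHm with (j - 1)%nat; auto. apply I_pred; auto. lia. }
      assert (ID2 : I m (fun q => pD false g (t q) - pD false g (t' q))).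
      { apply IHm with (j - 1)%nat; auto. apply I_pred; auto. lia. }
      apply I_plus with d; auto; try (apply Sm_plus; apply Sm_mult; auto).
      * apply I_plus with d; auto; try (apply Sm_mult; auto).
        -- apply I_mult with d m 0%nat; auto. apply I_0. lia.
        -- apply I_mult with d (j - 1)%nat (k - 1)%nat; auto. lia.
      * apply I_plus with d; auto; try (apply Sm_mult; auto).
        -- apply I_mult with d m 0%nat; auto. apply I_0. lia.
        -- apply I_mult with d (j - 1)%nat (k - 1)%nat; auto. lia.
Qed.

Ltac pDcalc := apply functional_extensionality; intros [x y]; unfold pD; simpl;
  apply is_derive_unique; auto_derive; [auto | ring].

Lemma quad_I3 (al be ga : R) :
  I 3 (fun p => al * fst p ^ 2 + be * (fst p * snd p) + ga * snd p ^ 2) -> al = 0 /\ be = 0 /\ ga = 0.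
Proof.
  intros H.
  assert (E1 : pD true (fun p => al * fst p ^ 2 + be * (fst p * snd p) + ga * snd p ^ 2) =
               fun p => 2 * al * fst p + be * snd p) by pDcalc.
  assert (E2 : pD false (fun p => al * fst p ^ 2 + be * (fst p * snd p) + ga * snd p ^ 2) =
               fun p => be * fst p + 2 * ga * snd p) by pDcalc.
  assert (E11 : pD true (fun p : R * R => 2 * al * fst p + be * snd p) = fun _ => 2 * al) by pDcalc.
  assert (E12 : pD false (fun p : R * R => 2 * al * fst p + be * snd p) = fun _ => be) by pDcalc.
  assert (E22 : pD false (fun p : R * R => be * fst p + 2 * ga * snd p) = fun _ => 2 * ga) by pDcalc.
  pose proof (H (true :: true :: nil) ltac:(simpl; lia)) as A. unfold pDs in A; cbn [fold_right] in A. rewrite E1, E11 in A.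
  pose proof (H (false :: true :: nil) ltac:(simpl; lia)) as B. unfold pDs in B; cbn [fold_right] in B. rewrite E1, E12 in B.
  pose proof (H (false :: false :: nil) ltac:(simpl; lia)) as C. unfold pDs in C; cbn [fold_right] in C. rewrite E2, E22 in C.
  lra.
Qed.

Lemma cubic_I4 (k1 k2 k3 k4 : R) :
  I 4 (fun p => k1 * fst p ^ 3 + k2 * (fst p ^ 2 * snd p) + k3 * (fst p * snd p ^ 2) + k4 * snd p ^ 3) ->
  k1 = 0 /\ k4 = 0.
Proof.
  intros H.
  assert (E1 : pD true (fun p => k1 * fst p ^ 3 + k2 * (fst p ^ 2 * snd p) + k3 * (fst p * snd p ^ 2) + k4 * snd p ^ 3) =
               fun p => 3 * k1 * fst p ^ 2 + 2 * k2 * fst p * snd p + k3 * snd p ^ 2) by pDcalc.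
  assert (E11 : pD true (fun p : R * R => 3 * k1 * fst p ^ 2 + 2 * k2 * fst p * snd p + k3 * snd p ^ 2) =
               fun p => 6 * k1 * fst p + 2 * k2 * snd p) by pDcalc.
  assert (E111 : pD true (fun p : R * R => 6 * k1 * fst p + 2 * k2 * snd p) = fun _ => 6 * k1) by pDcalc.
  assert (E2 : pD false (fun p => k1 * fst p ^ 3 + k2 * (fst p ^ 2 * snd p) + k3 * (fst p * snd p ^ 2) + k4 * snd p ^ 3) =
               fun p => k2 * fst p ^ 2 + 2 * k3 * fst p * snd p + 3 * k4 * snd p ^ 2) by pDcalc.
  assert (E22 : pD false (fun p : R * R => k2 * fst p ^ 2 + 2 * k3 * fst p * snd p + 3 * k4 * snd p ^ 2) =
               fun p => 2 * k3 * fst p + 6 * k4 * snd p) by pDcalc.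
  assert (E222 : pD false (fun p : R * R => 2 * k3 * fst p + 6 * k4 * snd p) = fun _ => 6 * k4) by pDcalc.
  pose proof (H (true :: true :: true :: nil) ltac:(simpl; lia)) as A. unfold pDs in A; cbn [fold_right] in A. rewrite E1, E11, E111 in A.
  pose proof (H (false :: false :: false :: nil) ltac:(simpl; lia)) as C. unfold pDs in C; cbn [fold_right] in C. rewrite E2, E22, E222 in C.
  lra.
Qed.

Lemma pDs_app2 l1 l2 g : pDs (l1 ++ l2) g = pDs l1 (pDs l2 g).
Proof. unfold pDs. apply fold_right_app. Qed.

Lemma pD_fst_scal_f (X : R * R -> R) : pD false (fun p => fst p * X p) = fun p => fst p * pD false X p.
Proof. apply functional_extensionality; intros [x y]; unfold pD; simpl. apply Derive_scal. Qed.
Lemma pD_snd_scal_t (X : R * R -> R) : pD true (fun p => snd p * X p) = fun p => snd p * pD true X p.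
Proof. apply functional_extensionality; intros [x y]; unfold pD; simpl. apply Derive_scal. Qed.

Lemma pDs_fst_F n (X : R * R -> R) : pDs (repeat false n) (fun p => fst p * X p) = fun p => fst p * pDs (repeat false n) X p.
Proof. induction n; simpl; auto. rewrite IHn. apply pD_fst_scal_f. Qed.
Lemma pDs_snd_T n (X : R * R -> R) : pDs (repeat true n) (fun p => snd p * X p) = fun p => snd p * pDs (repeat true n) X p.
Proof. induction n; simpl; auto. rewrite IHn. apply pD_snd_scal_t. Qed.

Lemma exd e g p : Sm e g -> near0 e p ->
  ex_derive (fun x => g (x, snd p)) (fst p) /\ ex_derive (fun y => g (fst p, y)) (snd p).
Proof. intros H Hp. destruct (H nil p Hp) as [A [B _]]. auto. Qed.

Lemma uT e g : Sm e g -> forall n, onB e (pDs (repeat true n) (fun p => fst p * g p))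
  (fun p => fst p * pDs (repeat true n) g p + INR n * pDs (repeat true (pred n)) g p).
Proof.
  intros Hg n. induction n.
  - intros p _. simpl. ring.
  - intros p Hp. change (pDs (repeat true (S n)) (fun p => fst p * g p) p) with
      (pD true (pDs (repeat true n) (fun p => fst p * g p)) p).
    rewrite (pD_ext e true _ _ IHn p Hp).
    assert (SX := Sm_pDs e (repeat true n) g Hg).
    assert (SY := Sm_pDs e (repeat true (pred n)) g Hg).
    pose proof (pD_plus e true (fun p : R * R => @fst R R p * pDs (repeat true n) g p) (fun p : R * R => INR n * pDs (repeat true (pred n)) g p) p Hp
      (exd e _ p (Sm_mult e _ _ (Sm_fst e) SX) Hp) (exd e _ p (Sm_scal e _ _ SY) Hp)) as E1. cbv beta in E1. rewrite E1.
    rewrite (pD_mult e true (@fst R R) (pDs (repeat true n) g) p Hp (exd e _ p (Sm_fst e) Hp) (exd e _ p SX Hp)).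
    rewrite pD_scal. rewrite pD_fst_t.
    change (pDs (repeat true (S n)) g p) with (pD true (pDs (repeat true n) g) p).
    rewrite S_INR. destruct n.
    + simpl. ring.
    + simpl pred. change (pD true (pDs (repeat true n) g) p) with (pDs (repeat true (S n)) g p). ring.
Qed.

Lemma vF e g : Sm e g -> forall n, onB e (pDs (repeat false n) (fun p => snd p * g p))
  (fun p => snd p * pDs (repeat false n) g p + INR n * pDs (repeat false (pred n)) g p).
Proof.
  intros Hg n. induction n.
  - intros p _. simpl. ring.
  - intros p Hp. change (pDs (repeat false (S n)) (fun p => snd p * g p) p) with
      (pD false (pDs (repeat false n) (fun p => snd p * g p)) p).
    rewrite (pD_ext e false _ _ IHn p Hp).
    assert (SX := Sm_pDs e (repeat false n) g Hg).
    assert (SY := Sm_pDs e (repeat false (pred n)) g Hg).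
    pose proof (pD_plus e false (fun p : R * R => @snd R R p * pDs (repeat false n) g p) (fun p : R * R => INR n * pDs (repeat false (pred n)) g p) p Hp
      (exd e _ p (Sm_mult e _ _ (Sm_snd e) SX) Hp) (exd e _ p (Sm_scal e _ _ SY) Hp)) as E1. cbv beta in E1. rewrite E1.
    rewrite (pD_mult e false (@snd R R) (pDs (repeat false n) g) p Hp (exd e _ p (Sm_snd e) Hp) (exd e _ p SX Hp)).
    rewrite pD_scal. rewrite pD_snd_f.
    change (pDs (repeat false (S n)) g p) with (pD false (pDs (repeat false n) g) p).
    rewrite S_INR. destruct n.
    + simpl. ring.
    + simpl pred. change (pD false (pDs (repeat false n) g) p) with (pDs (repeat false (S n)) g p). ring.
Qed.

Lemma perm_sort (ds : list bool) :
  Permutation ds (repeat false (count_occ Bool.bool_dec ds false) ++ repeat true (count_occ Bool.bool_dec ds true)).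
Proof.
  induction ds as [|b ds IH]; simpl; auto.
  destruct b; simpl.
  - apply Permutation_cons_app. exact IH.
  - apply perm_skip. exact IH.
Qed.

Lemma count_len (ds : list bool) :
  length ds = (count_occ Bool.bool_dec ds false + count_occ Bool.bool_dec ds true)%nat.
Proof. induction ds as [|b ds IH]; simpl; auto. destruct b; simpl; lia. Qed.

Lemma div_fst e k g : 0 < e -> Sm e g -> I (S k) (fun p => fst p * g p) -> I k g.
Proof.
  intros He Hg H ds Hl.
  set (cf := count_occ Bool.bool_dec ds false). set (ct := count_occ Bool.bool_dec ds true).
  assert (Hlen : length ds = (cf + ct)%nat) by apply count_len.
  rewrite (pDs_perm e g Hg _ _ (perm_sort ds) (0,0) (near0_0 e He)). fold cf ct.
  assert (K := H (repeat false cf ++ repeat true (S ct))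
                 ltac:(rewrite length_app, !repeat_length; lia)).
  rewrite pDs_app2 in K.
  rewrite (pDs_ext e (repeat false cf) _ _ (uT e g Hg (S ct)) (0,0) (near0_0 e He)) in K.
  assert (SX := Sm_pDs e (repeat true (S ct)) g Hg).
  assert (SY := Sm_pDs e (repeat true ct) g Hg).
  simpl pred in K.
  rewrite (pDs_plus e _ _ (Sm_mult e _ _ (Sm_fst e) SX) (Sm_scal e _ _ SY) (repeat false cf) (0,0) (near0_0 e He)) in K.
  rewrite pDs_fst_F, pDs_scal in K. simpl fst in K. rewrite pDs_app2.
  assert (0 < INR (S ct)) by (apply lt_0_INR; lia). nra.
Qed.

Lemma div_snd e k g : 0 < e -> Sm e g -> I (S k) (fun p => snd p * g p) -> I k g.
Proof.
  intros He Hg H ds Hl.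
  set (cf := count_occ Bool.bool_dec ds false). set (ct := count_occ Bool.bool_dec ds true).
  assert (Hlen : length ds = (cf + ct)%nat) by apply count_len.
  assert (P : Permutation ds (repeat true ct ++ repeat false cf)).
  { eapply perm_trans; [apply perm_sort|]. apply Permutation_app_comm. }
  rewrite (pDs_perm e g Hg _ _ P (0,0) (near0_0 e He)).
  assert (K := H (repeat true ct ++ repeat false (S cf))
                 ltac:(rewrite length_app, !repeat_length; lia)).
  rewrite pDs_app2 in K.
  rewrite (pDs_ext e (repeat true ct) _ _ (vF e g Hg (S cf)) (0,0) (near0_0 e He)) in K.
  assert (SX := Sm_pDs e (repeat false (S cf)) g Hg).
  assert (SY := Sm_pDs e (repeat false cf) g Hg).
  simpl pred in K.
  rewrite (pDs_plus e _ _ (Sm_mult e _ _ (Sm_snd e) SX) (Sm_scal e _ _ SY) (repeat true ct) (0,0) (near0_0 e He)) in K.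
  rewrite pDs_snd_T, pDs_scal in K. simpl snd in K. rewrite pDs_app2.
  assert (0 < INR (S cf)) by (apply lt_0_INR; lia). nra.
Qed.

Lemma uuu_fst e g : 0 < e -> Sm e g ->
  pDs (true :: true :: true :: nil) (fun p => fst p * g p) (0, 0) = 3 * pDs (true :: true :: nil) g (0, 0).
Proof.
  intros He Hg. pose proof (uT e g Hg 3 (0,0) (near0_0 e He)) as K. simpl repeat in K.
  rewrite K. simpl. ring.
Qed.

Lemma uuu_snd g : pDs (true :: true :: true :: nil) (fun p => snd p * g p) (0, 0) = 0.
Proof. pose proof (pDs_snd_T 3 g) as K. simpl repeat in K. rewrite K. simpl. ring. Qed.

Lemma vvv_snd e g : 0 < e -> Sm e g ->
  pDs (false :: false :: false :: nil) (fun p => snd p * g p) (0, 0) = 3 * pDs (false :: false :: nil) g (0, 0).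
Proof.
  intros He Hg. pose proof (vF e g Hg 3 (0,0) (near0_0 e He)) as K. simpl repeat in K.
  rewrite K. simpl. ring.
Qed.

Lemma vvv_fst g : pDs (false :: false :: false :: nil) (fun p => fst p * g p) (0, 0) = 0.
Proof. pose proof (pDs_fst_F 3 g) as K. simpl repeat in K. rewrite K. simpl. ring. Qed.

Lemma nz_of_pair P Q x : P * x = 0 -> Q * x = 0 -> (P <> 0 \/ Q <> 0) -> x = 0.
Proof.
  intros H1 H2 [H|H].
  - apply Rmult_integral in H1; tauto.
  - apply Rmult_integral in H2; tauto.
Qed.

Lemma alg2 (A : mat3) a ah P Q R S :
  0 < a -> 0 < ah -> P * S - Q * R > 0 -> SO3 A ->
  A 0%nat 0%nat * (P^2 - R^2) + A 0%nat 1%nat * a * (P^2 + R^2) = 1 ->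
  A 0%nat 0%nat * (P*Q - R*S) + A 0%nat 1%nat * a * (P*Q + R*S) = 0 ->
  A 0%nat 0%nat * (Q^2 - S^2) + A 0%nat 1%nat * a * (Q^2 + S^2) = -1 ->
  A 1%nat 0%nat * (P^2 - R^2) + A 1%nat 1%nat * a * (P^2 + R^2) = ah ->
  A 1%nat 0%nat * (P*Q - R*S) + A 1%nat 1%nat * a * (P*Q + R*S) = 0 ->
  A 1%nat 0%nat * (Q^2 - S^2) + A 1%nat 1%nat * a * (Q^2 + S^2) = ah ->
  A 2%nat 0%nat * (P^2 - R^2) + A 2%nat 1%nat * a * (P^2 + R^2) = 0 ->
  A 2%nat 0%nat * (P*Q - R*S) + A 2%nat 1%nat * a * (P*Q + R*S) = 0 ->
  A 2%nat 0%nat * (Q^2 - S^2) + A 2%nat 1%nat * a * (Q^2 + S^2) = 0 ->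
  a = ah /\
  ((is_id3 A /\ Q = 0 /\ R = 0 /\ P = S /\ P * P = 1) \/
   (A 2%nat 2%nat = -1 /\ A 2%nat 0%nat = 0 /\ A 2%nat 1%nat = 0 /\ P = 0 /\ S = 0 /\ Q * R = -1)).
Proof.
  intros Ha Hah HD [HO Hdet] E0a E0b E0c E1a E1b E1c E2a E2b E2c.
  set (D := P * S - Q * R) in *.
  assert (HPQ : P <> 0 \/ Q <> 0).
  { destruct (Req_dec P 0); [right; intro; subst; unfold D in HD; nra | left; auto]. }
  assert (HRS : R <> 0 \/ S <> 0).
  { destruct (Req_dec R 0); [right; intro; subst; unfold D in HD; nra | left; auto]. }
  assert (HD0 : D <> 0) by lra.
  set (x1 := A 2%nat 0%nat + A 2%nat 1%nat * a). set (x2 := A 2%nat 1%nat * a - A 2%nat 0%nat).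
  assert (F1 : x1 * P * D = 0).
  { replace (x1 * P * D) with (S * (x1 * P^2 + x2 * R^2) - R * (x1 * P * Q + x2 * R * S)) by (unfold x1, x2, D; ring).
    replace (x1 * P^2 + x2 * R^2) with 0 by (unfold x1, x2; rewrite <- E2a; ring).
    replace (x1 * P * Q + x2 * R * S) with 0 by (unfold x1, x2; rewrite <- E2b; ring). ring. }
  assert (F2 : x1 * Q * D = 0).
  { replace (x1 * Q * D) with (S * (x1 * P * Q + x2 * R * S) - R * (x1 * Q^2 + x2 * S^2)) by (unfold x1, x2, D; ring).
    replace (x1 * Q^2 + x2 * S^2) with 0 by (unfold x1, x2; rewrite <- E2c; ring).
    replace (x1 * P * Q + x2 * R * S) with 0 by (unfold x1, x2; rewrite <- E2b; ring). ring. }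
  assert (F3 : x2 * R * D = 0).
  { replace (x2 * R * D) with (- (Q * (x1 * P^2 + x2 * R^2) - P * (x1 * P * Q + x2 * R * S))) by (unfold x1, x2, D; ring).
    replace (x1 * P^2 + x2 * R^2) with 0 by (unfold x1, x2; rewrite <- E2a; ring).
    replace (x1 * P * Q + x2 * R * S) with 0 by (unfold x1, x2; rewrite <- E2b; ring). ring. }
  assert (F4 : x2 * S * D = 0).
  { replace (x2 * S * D) with (- (Q * (x1 * P * Q + x2 * R * S) - P * (x1 * Q^2 + x2 * S^2))) by (unfold x1, x2, D; ring).
    replace (x1 * Q^2 + x2 * S^2) with 0 by (unfold x1, x2; rewrite <- E2c; ring).
    replace (x1 * P * Q + x2 * R * S) with 0 by (unfold x1, x2; rewrite <- E2b; ring). ring. }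
  assert (X1 : x1 = 0).
  { apply (nz_of_pair P Q); auto.
    - apply Rmult_integral in F1; destruct F1; [nra|tauto].
    - apply Rmult_integral in F2; destruct F2; [nra|tauto]. }
  assert (X2 : x2 = 0).
  { apply (nz_of_pair R S); auto.
    - apply Rmult_integral in F3; destruct F3; [nra|tauto].
    - apply Rmult_integral in F4; destruct F4; [nra|tauto]. }
  assert (A20 : A 2%nat 0%nat = 0) by (unfold x1, x2 in *; lra).
  assert (A21a : A 2%nat 1%nat * a = 0) by (unfold x1, x2 in *; lra).
  assert (A21 : A 2%nat 1%nat = 0).
  { apply Rmult_integral in A21a; destruct A21a; [auto|lra]. }
  clear x1 x2 X1 X2 F1 F2 F3 F4.
  set (x1 := A 0%nat 0%nat + A 0%nat 1%nat * a). set (x2 := A 0%nat 1%nat * a - A 0%nat 0%nat).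
  set (y1 := A 1%nat 0%nat + A 1%nat 1%nat * a). set (y2 := A 1%nat 1%nat * a - A 1%nat 0%nat).
  assert (G1 : x1 * P^2 + x2 * R^2 = 1) by (rewrite <- E0a; unfold x1, x2; ring).
  assert (G2 : x1 * P * Q + x2 * R * S = 0) by (rewrite <- E0b; unfold x1, x2; ring).
  assert (G3 : x1 * Q^2 + x2 * S^2 = -1) by (rewrite <- E0c; unfold x1, x2; ring).
  assert (H1 : y1 * P^2 + y2 * R^2 = ah) by (rewrite <- E1a; unfold y1, y2; ring).
  assert (H2 : y1 * P * Q + y2 * R * S = 0) by (rewrite <- E1b; unfold y1, y2; ring).
  assert (H3 : y1 * Q^2 + y2 * S^2 = ah) by (rewrite <- E1c; unfold y1, y2; ring).
  clear E0a E0b E0c E1a E1b E1c E2a E2b E2c.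
  assert (K1 : x1 * P * D = S).
  { unfold D. transitivity (S * (x1 * P^2 + x2 * R^2) - R * (x1 * P * Q + x2 * R * S)); [ring|]. rewrite G1, G2. ring. }
  assert (K2 : x1 * Q * D = R).
  { unfold D. transitivity (S * (x1 * P * Q + x2 * R * S) - R * (x1 * Q^2 + x2 * S^2)); [ring|]. rewrite G2, G3. ring. }
  assert (K3 : x2 * R * D = - Q).
  { unfold D. transitivity (- (Q * (x1 * P^2 + x2 * R^2) - P * (x1 * P * Q + x2 * R * S))); [ring|]. rewrite G1, G2. ring. }
  assert (K4 : x2 * S * D = - P).
  { unfold D. transitivity (- (Q * (x1 * P * Q + x2 * R * S) - P * (x1 * Q^2 + x2 * S^2))); [ring|]. rewrite G2, G3. ring. }
  assert (L1 : y1 * P * D = S * ah).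
  { unfold D. transitivity (S * (y1 * P^2 + y2 * R^2) - R * (y1 * P * Q + y2 * R * S)); [ring|]. rewrite H1, H2. ring. }
  assert (L2 : y1 * Q * D = - R * ah).
  { unfold D. transitivity (S * (y1 * P * Q + y2 * R * S) - R * (y1 * Q^2 + y2 * S^2)); [ring|]. rewrite H2, H3. ring. }
  assert (L3 : y2 * R * D = - Q * ah).
  { unfold D. transitivity (- (Q * (y1 * P^2 + y2 * R^2) - P * (y1 * P * Q + y2 * R * S))); [ring|]. rewrite H1, H2. ring. }
  assert (L4 : y2 * S * D = P * ah).
  { unfold D. transitivity (- (Q * (y1 * P * Q + y2 * R * S) - P * (y1 * Q^2 + y2 * S^2))); [ring|]. rewrite H2, H3. ring. }
  assert (SQ1 : S * Q = R * P).
  { rewrite <- K1, <- K2. ring. }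
  assert (SQ2 : S * Q * ah = - R * P * ah).
  { replace (S * Q * ah) with ((S * ah) * Q) by ring. rewrite <- L1.
    replace (- R * P * ah) with ((- R * ah) * P) by ring. rewrite <- L2. ring. }
  assert (RP : R * P = 0) by nra.
  assert (SQ : S * Q = 0) by nra.
  assert (O00 := HO 0%nat 0%nat ltac:(lia) ltac:(lia)). assert (O11 := HO 1%nat 1%nat ltac:(lia) ltac:(lia)).
  assert (O01 := HO 0%nat 1%nat ltac:(lia) ltac:(lia)). assert (O02 := HO 0%nat 2%nat ltac:(lia) ltac:(lia)).
  assert (O12 := HO 1%nat 2%nat ltac:(lia) ltac:(lia)). assert (O22 := HO 2%nat 2%nat ltac:(lia) ltac:(lia)).
  unfold kron in O00, O11, O01, O02, O12, O22. simpl in O00, O11, O01, O02, O12, O22.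
  rewrite A20, A21 in *.
  unfold det3 in Hdet. rewrite A20, A21 in Hdet.
  set (a00 := A 0%nat 0%nat) in *. set (a01 := A 0%nat 1%nat) in *. set (a02 := A 0%nat 2%nat) in *.
  set (a10 := A 1%nat 0%nat) in *. set (a11 := A 1%nat 1%nat) in *. set (a12 := A 1%nat 2%nat) in *.
  set (a22 := A 2%nat 2%nat) in *.
  subst D.
  destruct (Req_dec P 0) as [P0|P0].
  -
    subst P. assert (HQR : Q * R <> 0) by nra.
    assert (Qn : Q <> 0) by (intro; subst; lra). assert (Rn : R <> 0) by (intro; subst; lra).
    assert (S0 : S = 0).
    { apply Rmult_integral in SQ; destruct SQ; [auto|tauto]. }
    subst S.
    assert (Q2 : 0 < Q^2) by nra. assert (R2 : 0 < R^2) by nra.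
    assert (ex1 : x1 * Q^2 = -1).
    { apply Rmult_eq_reg_r with R; [|auto]. replace (x1 * Q^2 * R) with (- (x1 * Q * (0 * 0 - Q * R))) by ring. rewrite K2. ring. }
    assert (ex2 : x2 * R^2 = 1).
    { apply Rmult_eq_reg_r with Q; [|auto]. replace (x2 * R^2 * Q) with (- (x2 * R * (0 * 0 - Q * R))) by ring. rewrite K3. ring. }
    assert (ey1 : y1 * Q^2 = ah).
    { apply Rmult_eq_reg_r with R; [|auto]. replace (y1 * Q^2 * R) with (- (y1 * Q * (0 * 0 - Q * R))) by ring. rewrite L2. ring. }
    assert (ey2 : y2 * R^2 = ah).
    { apply Rmult_eq_reg_r with Q; [|auto]. replace (y2 * R^2 * Q) with (- (y2 * R * (0 * 0 - Q * R))) by ring. rewrite L3. ring. }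
    assert (Y1 : y1 = - ah * x1) by (apply Rmult_eq_reg_r with (Q^2); nra).
    assert (Y2 : y2 = ah * x2) by (apply Rmult_eq_reg_r with (R^2); nra).
    assert (x1 < 0) by nra. assert (0 < x2) by nra.
    assert (A00n : a00 < 0) by (unfold x1, x2 in *; lra).
    assert (A11e : a11 * a = - ah * a00) by (unfold x1, x2, y1, y2 in *; nra).
    assert (A10e : a10 = - ah * a * a01) by (unfold x1, x2, y1, y2 in *; nra).
    assert (T : a00 * a01 * a + (- ah * a * a01) * (a11 * a) = 0).
    { rewrite <- A10e. replace (a00 * a01 * a + a10 * (a11 * a)) with (a * (a00 * a01 + a10 * a11 + 0 * 0)) by ring.
      rewrite O01. ring. }
    rewrite A11e in T.
    assert (T2 : a00 * a01 * (a * (1 + ah * ah)) = 0) by (rewrite <- T; ring).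
    assert (a01z : a01 = 0).
    { apply Rmult_integral in T2. destruct T2 as [T2|T2]; [|nra].
      apply Rmult_integral in T2. destruct T2; [lra|auto]. }
    rewrite a01z in *. assert (a10z : a10 = 0) by (rewrite A10e; ring).
    rewrite a10z in *.
    assert (a00v : a00 = -1) by nra.
    rewrite a00v in *.
    assert (a11v : a11 = 1) by nra.
    rewrite a11v in *.
    assert (ahv : a = ah) by nra.
    assert (a02z : a02 = 0) by nra. assert (a12z : a12 = 0) by nra.
    rewrite a02z, a12z in *.
    assert (a22v : a22 = -1) by nra.
    split; auto. right.
    assert (x1 = -1) by (unfold x1; rewrite a00v, a01z; ring).
    assert (x2 = 1) by (unfold x2; rewrite a00v, a01z; ring).
    repeat split; auto; nra.
  -
    assert (R0 : R = 0).
    { apply Rmult_integral in RP; destruct RP; [auto|tauto]. }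
    subst R.
    assert (Sn : S <> 0) by (intro; subst; lra).
    assert (Q0 : Q = 0).
    { apply Rmult_integral in SQ; destruct SQ; [tauto|auto]. }
    subst Q.
    assert (P2 : 0 < P^2) by nra. assert (S2 : 0 < S^2) by nra.
    assert (ex1 : x1 * P^2 = 1).
    { apply Rmult_eq_reg_r with S; [|auto]. replace (x1 * P^2 * S) with (x1 * P * (P * S - 0 * 0)) by ring. rewrite K1. ring. }
    assert (ex2 : x2 * S^2 = -1).
    { apply Rmult_eq_reg_r with P; [|auto]. replace (x2 * S^2 * P) with (x2 * S * (P * S - 0 * 0)) by ring. rewrite K4. ring. }
    assert (ey1 : y1 * P^2 = ah).
    { apply Rmult_eq_reg_r with S; [|auto]. replace (y1 * P^2 * S) with (y1 * P * (P * S - 0 * 0)) by ring. rewrite L1. ring. }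
    assert (ey2 : y2 * S^2 = ah).
    { apply Rmult_eq_reg_r with P; [|auto]. replace (y2 * S^2 * P) with (y2 * S * (P * S - 0 * 0)) by ring. rewrite L4. ring. }
    assert (Y1 : y1 = ah * x1) by (apply Rmult_eq_reg_r with (P^2); nra).
    assert (Y2 : y2 = - ah * x2) by (apply Rmult_eq_reg_r with (S^2); nra).
    assert (0 < x1) by nra. assert (x2 < 0) by nra.
    assert (A00p : 0 < a00) by (unfold x1, x2 in *; lra).
    assert (A11e : a11 * a = ah * a00) by (unfold x1, x2, y1, y2 in *; nra).
    assert (A10e : a10 = ah * a * a01) by (unfold x1, x2, y1, y2 in *; nra).
    assert (T : a00 * a01 * a + (ah * a * a01) * (a11 * a) = 0).
    { rewrite <- A10e. replace (a00 * a01 * a + a10 * (a11 * a)) with (a * (a00 * a01 + a10 * a11 + 0 * 0)) by ring.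
      rewrite O01. ring. }
    rewrite A11e in T.
    assert (T2 : a00 * a01 * (a * (1 + ah * ah)) = 0) by (rewrite <- T; ring).
    assert (a01z : a01 = 0).
    { apply Rmult_integral in T2. destruct T2 as [T2|T2]; [|nra].
      apply Rmult_integral in T2. destruct T2; [lra|auto]. }
    rewrite a01z in *. assert (a10z : a10 = 0) by (rewrite A10e; ring).
    rewrite a10z in *.
    assert (a00v : a00 = 1) by nra.
    rewrite a00v in *.
    assert (a11v : a11 = 1) by nra.
    rewrite a11v in *.
    assert (ahv : a = ah) by nra.
    assert (a02z : a02 = 0) by nra. assert (a12z : a12 = 0) by nra.
    rewrite a02z, a12z in *.
    assert (a22v : a22 = 1) by nra.
    split; auto. left.
    assert (x1 = 1) by (unfold x1; rewrite a00v, a01z; ring).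
    assert (x2 = -1) by (unfold x2; rewrite a00v, a01z; ring).
    split.
    + intros i j Hi Hj. unfold kron.
      destruct i as [|[|[|i]]]; try lia; destruct j as [|[|[|j]]]; try lia; simpl; auto.
    + split; auto. split; auto. nra.
Qed.

Ltac sm := repeat match goal with
  | |- Sm _ _ => assumption
  | |- Sm _ (fun x => @?A x + @?B x) => apply (Sm_plus _ A B)
  | |- Sm _ (fun x => @?A x - @?B x) => apply (Sm_minus _ A B)
  | |- Sm _ (fun x => @?A x * @?B x) => apply (Sm_mult _ A B)
  | |- Sm _ (fun x => @?A x ^ ?n) => apply (Sm_pow _ A n)
  | |- Sm _ (fun x => - @?A x) => apply (Sm_opp _ A)
  | |- Sm _ (fun _ => ?c) => apply Sm_const
  | |- Sm _ (fun x => fst x) => apply Sm_fst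
  | |- Sm _ (fun x => snd x) => apply Sm_snd
  | |- Sm _ fst => apply Sm_fst
  | |- Sm _ snd => apply Sm_snd
  | _ => assumption
  end.

Lemma I_fst : I 1 fst.
Proof. intros ds Hl. destruct ds; simpl in *; [reflexivity|lia]. Qed.
Lemma I_snd : I 1 snd.
Proof. intros ds Hl. destruct ds; simpl in *; [reflexivity|lia]. Qed.

Lemma I_pow e k g n : 0 < e -> Sm e g -> I k g -> I (n * k) (fun p => g p ^ n).
Proof.
  intros He Hg H. induction n.
  - apply I_0.
  - exact (I_mult e He (S n * k) g (fun p => g p ^ n) k (n * k) Hg (Sm_pow e g n Hg) H IHn ltac:(lia)).
Qed.

Definition f0 : R * R -> R := fun p => fst p ^ 2 - snd p ^ 2.
Definition q2 : R * R -> R := fun p => fst p ^ 2 + snd p ^ 2.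
Definition lin (l1 l2 l3 l4 : R) : R * R -> R * R := fun q => (l1 * fst q + l2 * snd q, l3 * fst q + l4 * snd q).
Definition cub (x y : R) : R * R -> R := fun p => x * fst p ^ 3 + y * snd p ^ 3.
Definition Fr (A : mat3) (a : R) (b c : R * R -> R) (i : nat) : R * R -> R :=
  fun p => A i 0%nat * f0 p + A i 1%nat * (a * q2 p + b p) + A i 2%nat * c p.
Definition Fh (ah : R) (bh ch : R * R -> R) (i : nat) : R * R -> R :=
  fun p => match i with 0%nat => f0 p | 1%nat => ah * q2 p + bh p | _ => ch p end.

Lemma Sm_f0 e : Sm e f0.
Proof. unfold f0; sm. Qed.
Lemma Sm_q2 e : Sm e q2.
Proof. unfold q2; sm. Qed.
Lemma Sm_cub e x y : Sm e (cub x y).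
Proof. unfold cub; sm. Qed.

Lemma I_sq_fst e : 0 < e -> I 2 (fun p => fst p ^ 2).
Proof. intros He. apply (I_pow e 1 fst 2 He (Sm_fst e) I_fst). Qed.
Lemma I_sq_snd e : 0 < e -> I 2 (fun p => snd p ^ 2).
Proof. intros He. apply (I_pow e 1 snd 2 He (Sm_snd e) I_snd). Qed.

Lemma I_f0 : I 2 f0.
Proof.
  unfold f0. apply (I_minus 1); try lra; try sm; [apply (I_sq_fst 1) | apply (I_sq_snd 1)]; lra.
Qed.
Lemma I_q2 : I 2 q2.
Proof.
  unfold q2. apply (I_plus 1); try lra; try sm; [apply (I_sq_fst 1) | apply (I_sq_snd 1)]; lra.
Qed.
Lemma I_cub x y : I 3 (cub x y).
Proof.
  unfold cub. apply (I_plus 1); try lra; try sm; apply I_scal;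
    [apply (I_pow 1 1 fst 3) | apply (I_pow 1 1 snd 3)]; try lra; try sm; [apply I_fst | apply I_snd].
Qed.

Lemma I2_lin e g : 0 < e -> Sm e g -> g (0, 0) = 0 ->
  I 2 (fun q => g q - (pD true g (0, 0) * fst q + pD false g (0, 0) * snd q)).
Proof.
  intros He Hg H0. apply I_S_intro.
  - simpl. rewrite H0. ring.
  - intros b. apply I_S_intro; [|intros; apply I_0].
    assert (Sl : Sm e (fun q : R * R => pD true g (0, 0) * fst q + pD false g (0, 0) * snd q)) by sm.
    rewrite (pD_minus e b g _ (0,0) Hg Sl (near0_0 e He)).
    assert (E : pD b (fun q : R * R => pD true g (0, 0) * fst q + pD false g (0, 0) * snd q) =
                fun _ => if b then pD true g (0, 0) else pD false g (0, 0)).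
    { destruct b; pDcalc. }
    rewrite E. destruct b; ring.
Qed.

Lemma lin0 l1 l2 l3 l4 : lin l1 l2 l3 l4 (0, 0) = (0, 0).
Proof. unfold lin; simpl. f_equal; ring. Qed.

Lemma Sm_lin1 e l1 l2 l3 l4 : Sm e (t1 (lin l1 l2 l3 l4)).
Proof. unfold t1, lin; simpl. sm. Qed.
Lemma Sm_lin2 e l1 l2 l3 l4 : Sm e (t2 (lin l1 l2 l3 l4)).
Proof. unfold t2, lin; simpl. sm. Qed.

Ltac ilin e := repeat match goal with
  | |- I _ _ => assumption
  | |- I _ (fun x => @?A x + @?B x) => apply (I_plus e _ A B); [lra | sm | sm | | ]
  | |- I _ (fun x => @?A x - @?B x) => apply (I_minus e _ A B); [lra | sm | sm | | ]
  | |- I _ (fun x => ?c * @?A x) => apply (I_scal _ c A)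
  | |- I _ (fun x => - @?A x) => apply (I_opp _ A)
  end.

Lemma row2 (d ef a : R) (b c : R * R -> R) (t : R * R -> R * R) (P Q Rr S a0 a1 a2 Tu Tv : R) (Fhi : R * R -> R) :
  0 < d -> Sm ef b -> Sm ef c -> I 3 b -> I 3 c ->
  Sm d (t1 t) -> Sm d (t2 t) -> maps d ef t -> t (0, 0) = (0, 0) -> maps d ef (lin P Q Rr S) ->
  I 2 (fun q => t1 t q - t1 (lin P Q Rr S) q) -> I 2 (fun q => t2 t q - t2 (lin P Q Rr S) q) ->
  Sm d Fhi -> I 3 (fun q => Fhi q - (Tu * fst q ^ 2 + Tv * snd q ^ 2)) ->
  I 3 (fun q => (a0 * f0 (t q) + a1 * (a * q2 (t q) + b (t q)) + a2 * c (t q)) - Fhi q) ->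
  a0 * (P^2 - Rr^2) + a1 * a * (P^2 + Rr^2) = Tu /\
  a0 * (P*Q - Rr*S) + a1 * a * (P*Q + Rr*S) = 0 /\
  a0 * (Q^2 - S^2) + a1 * a * (Q^2 + S^2) = Tv.
Proof.
  intros Hd Sb Sc Ib Ic S1 S2 Hm H0 Hml J1 J2 SF IF H.
  set (L := lin P Q Rr S) in *.
  assert (SL1 : Sm d (t1 L)) by apply Sm_lin1. assert (SL2 : Sm d (t2 L)) by apply Sm_lin2.
  assert (HL0 : L (0,0) = (0,0)) by apply lin0.
  assert (Sf0t : Sm d (fun q => f0 (t q))) by (apply Sm_comp with ef; auto; apply Sm_f0).
  assert (Sq2t : Sm d (fun q => q2 (t q))) by (apply Sm_comp with ef; auto; apply Sm_q2).
  assert (Sf0L : Sm d (fun q => f0 (L q))) by (apply Sm_comp with ef; auto; apply Sm_f0).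
  assert (Sq2L : Sm d (fun q => q2 (L q))) by (apply Sm_comp with ef; auto; apply Sm_q2).
  assert (Sbt : Sm d (fun q => b (t q))) by (apply Sm_comp with ef; auto).
  assert (Sct : Sm d (fun q => c (t q))) by (apply Sm_comp with ef; auto).
  assert (K1 : I 3 (fun q => f0 (t q) - f0 (L q))).
  { apply (I_compdiff ef d t L Hd Hm Hml S1 S2 SL1 SL2 H0 HL0 2 ltac:(lia) J1 J2 3 f0 2 (Sm_f0 ef) I_f0 ltac:(lia)). }
  assert (K2 : I 3 (fun q => q2 (t q) - q2 (L q))).
  { apply (I_compdiff ef d t L Hd Hm Hml S1 S2 SL1 SL2 H0 HL0 2 ltac:(lia) J1 J2 3 q2 2 (Sm_q2 ef) I_q2 ltac:(lia)). }
  assert (K3 : I 3 (fun q => b (t q))) by (apply (I_comp0 ef d t Hd Hm S1 S2 H0 3 b Sb Ib)).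
  assert (K4 : I 3 (fun q => c (t q))) by (apply (I_comp0 ef d t Hd Hm S1 S2 H0 3 c Sc Ic)).
  assert (Hq : I 3 (fun p => (a0 * (P^2 - Rr^2) + a1 * a * (P^2 + Rr^2) - Tu) * fst p ^ 2 +
                           (2 * (a0 * (P*Q - Rr*S) + a1 * a * (P*Q + Rr*S))) * (fst p * snd p) +
                           (a0 * (Q^2 - S^2) + a1 * a * (Q^2 + S^2) - Tv) * snd p ^ 2)).
  { apply I_ext with d (fun q => ((a0 * f0 (t q) + a1 * (a * q2 (t q) + b (t q)) + a2 * c (t q)) - Fhi q)
        + (Fhi q - (Tu * fst q ^ 2 + Tv * snd q ^ 2))
        - (a0 * (f0 (t q) - f0 (L q)) + (a1 * a) * (q2 (t q) - q2 (L q)) + a1 * b (t q) + a2 * c (t q))); auto.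
    - intros q _. unfold L, lin, f0, q2. simpl. ring.
    - ilin d. }
  apply quad_I3 in Hq. lra.
Qed.

Lemma I3_of_cub ef c g1 g3 : 0 < ef -> Sm ef c -> I 4 (fun p => c p - cub g1 g3 p) -> I 3 c.
Proof.
  intros Hef Sc Ic.
  assert (Scub : Sm ef (cub g1 g3)) by apply Sm_cub.
  apply I_ext with 1 (fun p => (c p - cub g1 g3 p) + cub g1 g3 p); [lra | intros p _; ring |].
  apply (I_plus ef); auto.
  - sm.
  - apply (I_le 4); auto.
  - apply I_cub.
Qed.

Lemma row_c (d ef : R) (c ch : R * R -> R) (t : R * R -> R * R) (P Q Rr S a2 g1 g3 h1 h3 : R) :
  0 < d -> 0 < ef -> Sm ef c -> Sm d ch -> I 4 (fun p => c p - cub g1 g3 p) -> I 4 (fun p => ch p - cub h1 h3 p) ->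
  Sm d (t1 t) -> Sm d (t2 t) -> maps d ef t -> t (0, 0) = (0, 0) -> maps d ef (lin P Q Rr S) ->
  I 2 (fun q => t1 t q - t1 (lin P Q Rr S) q) -> I 2 (fun q => t2 t q - t2 (lin P Q Rr S) q) ->
  I 4 (fun q => a2 * c (t q) - ch q) ->
  a2 * (g1 * P^3 + g3 * Rr^3) = h1 /\ a2 * (g1 * Q^3 + g3 * S^3) = h3.
Proof.
  intros Hd Hef Sc Sch Ic Ich S1 S2 Hm H0 Hml J1 J2 H.
  set (L := lin P Q Rr S) in *.
  assert (SL1 : Sm d (t1 L)) by apply Sm_lin1. assert (SL2 : Sm d (t2 L)) by apply Sm_lin2.
  assert (HL0 : L (0,0) = (0,0)) by apply lin0.
  assert (Sc3 : Sm ef (fun p => c p - cub g1 g3 p)) by (assert (Sm ef (cub g1 g3)) by apply Sm_cub; sm).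
  assert (Sch3 : Sm d (cub h1 h3)) by apply Sm_cub.
  assert (Ic3 := I3_of_cub ef c g1 g3 Hef Sc Ic).
  assert (Sct : Sm d (fun q => c (t q))) by (apply Sm_comp with ef; auto).
  assert (ScL : Sm d (fun q => c (L q))) by (apply Sm_comp with ef; auto).
  assert (Sc3L : Sm d (fun q => c (L q) - cub g1 g3 (L q))).
  { apply (Sm_comp ef d (fun p => c p - cub g1 g3 p) L); auto. }
  assert (K1 : I 4 (fun q => c (t q) - c (L q))).
  { apply (I_compdiff ef d t L Hd Hm Hml S1 S2 SL1 SL2 H0 HL0 2 ltac:(lia) J1 J2 4 c 3 Sc Ic3 ltac:(lia)). }
  assert (K2 : I 4 (fun q => c (L q) - cub g1 g3 (L q))).
  { apply (I_comp0 ef d L Hd Hml SL1 SL2 HL0 4 (fun p => c p - cub g1 g3 p) Sc3 Ic). }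
  assert (Hq : I 4 (fun p => (a2 * (g1 * P^3 + g3 * Rr^3) - h1) * fst p ^ 3 +
       (a2 * (3 * g1 * P^2 * Q + 3 * g3 * Rr^2 * S)) * (fst p ^ 2 * snd p) +
       (a2 * (3 * g1 * P * Q^2 + 3 * g3 * Rr * S^2)) * (fst p * snd p ^ 2) +
       (a2 * (g1 * Q^3 + g3 * S^3) - h3) * snd p ^ 3)).
  { apply I_ext with d (fun q => (a2 * c (t q) - ch q) - a2 * (c (t q) - c (L q))
        - a2 * (c (L q) - cub g1 g3 (L q)) + (ch q - cub h1 h3 q)); auto.
    - intros q _. unfold L, lin, cub. simpl. ring.
    - ilin d. }
  apply cubic_I4 in Hq. lra.
Qed.

Lemma cub_uuu (k1 k2 : R) : pDs (true :: true :: true :: nil) (cub k1 k2) (0, 0) = 6 * k1.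
Proof.
  assert (E1 : pD true (cub k1 k2) = fun p => 3 * k1 * fst p ^ 2) by (unfold cub; pDcalc).
  assert (E2 : pD true (fun p : R * R => 3 * k1 * fst p ^ 2) = fun p => 6 * k1 * fst p) by pDcalc.
  assert (E3 : pD true (fun p : R * R => 6 * k1 * fst p) = fun p => 6 * k1) by pDcalc.
  unfold pDs; cbn [fold_right]. rewrite E1, E2, E3. reflexivity.
Qed.
Lemma cub_vvv (k1 k2 : R) : pDs (false :: false :: false :: nil) (cub k1 k2) (0, 0) = 6 * k2.
Proof.
  assert (E1 : pD false (cub k1 k2) = fun p => 3 * k2 * snd p ^ 2) by (unfold cub; pDcalc).
  assert (E2 : pD false (fun p : R * R => 3 * k2 * snd p ^ 2) = fun p => 6 * k2 * snd p) by pDcalc.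
  assert (E3 : pD false (fun p : R * R => 6 * k2 * snd p) = fun p => 6 * k2) by pDcalc.
  unfold pDs; cbn [fold_right]. rewrite E1, E2, E3. reflexivity.
Qed.

Lemma lin_id q : lin 1 0 0 1 q = q.
Proof. destruct q as [x y]. unfold lin; simpl. f_equal; ring. Qed.

Lemma row_b (d ef a : R) (b bh : R * R -> R) (t : R * R -> R * R) (g1 g3 h1 h3 : R) :
  0 < d -> 0 < ef -> Sm ef b -> Sm d bh -> I 4 (fun p => b p - cub g1 g3 p) -> I 4 (fun p => bh p - cub h1 h3 p) ->
  Sm d (t1 t) -> Sm d (t2 t) -> maps d ef t -> t (0, 0) = (0, 0) -> maps d ef (lin 1 0 0 1) ->
  I 2 (fun q => t1 t q - t1 (lin 1 0 0 1) q) -> I 2 (fun q => t2 t q - t2 (lin 1 0 0 1) q) ->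
  I 4 (fun q => f0 (t q) - f0 q) ->
  I 4 (fun q => (a * q2 (t q) + b (t q)) - (a * q2 q + bh q)) ->
  g1 = h1 /\ g3 = h3.
Proof.
  intros Hd Hef Sb Sbh Ib Ibh S1 S2 Hm H0 Hml J1 J2 R0 R1.
  set (L := lin 1 0 0 1) in *.
  assert (SL1 : Sm d (t1 L)) by apply Sm_lin1. assert (SL2 : Sm d (t2 L)) by apply Sm_lin2.
  assert (HL0 : L (0,0) = (0,0)) by apply lin0.
  set (e1 := fun q => t1 t q - fst q). set (e2 := fun q => t2 t q - snd q).
  assert (Se1 : Sm d e1) by (unfold e1; sm). assert (Se2 : Sm d e2) by (unfold e2; sm).
  assert (Ie1 : I 2 e1).
  { apply I_ext with d (fun q => t1 t q - t1 L q); auto. intros q _. unfold e1, L, t1, lin. simpl. ring. }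
  assert (Ie2 : I 2 e2).
  { apply I_ext with d (fun q => t2 t q - t2 L q); auto. intros q _. unfold e2, L, t2, lin. simpl. ring. }
  assert (I11 : I 4 (fun q => e1 q * e1 q)) by (apply (I_mult d Hd 4 e1 e1 2 2); auto).
  assert (I22 : I 4 (fun q => e2 q * e2 q)) by (apply (I_mult d Hd 4 e2 e2 2 2); auto).
  assert (Ib3 := I3_of_cub ef b g1 g3 Hef Sb Ib).
  assert (Sbt : Sm d (fun q => b (t q))) by (apply Sm_comp with ef; auto).
  assert (SbL : Sm d (fun q => b (L q))) by (apply Sm_comp with ef; auto).
  assert (Sbd : Sm d b).
  { apply Sm_ext with (fun q => b (L q)); auto. intros q _. unfold L. rewrite lin_id. reflexivity. }
  assert (Scub : forall x y, Sm d (cub x y)) by (intros; apply Sm_cub).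
  assert (Sg : Sm d (cub g1 g3)) by apply Scub. assert (Sh : Sm d (cub h1 h3)) by apply Scub.
  assert (Ibd : I 4 (fun q => b q - cub g1 g3 q)) by exact Ib.
  assert (K1 : I 4 (fun q => b (t q) - b (L q))).
  { apply (I_compdiff ef d t L Hd Hm Hml S1 S2 SL1 SL2 H0 HL0 2 ltac:(lia) J1 J2 4 b 3 Sb Ib3 ltac:(lia)). }
  assert (K1' : I 4 (fun q => b (t q) - b q)).
  { apply I_ext with d (fun q => b (t q) - b (L q)); auto. intros q _. unfold L. rewrite lin_id. reflexivity. }
  set (U1 := fun q : R * R => fst q * e1 q). set (U2 := fun q : R * R => snd q * e2 q).
  assert (SU1 : Sm d U1) by (unfold U1; sm). assert (SU2 : Sm d U2) by (unfold U2; sm).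
  assert (Sf0t : Sm d (fun q => f0 (t q))) by (apply Sm_comp with ef; auto; apply Sm_f0).
  assert (Sq2t : Sm d (fun q => q2 (t q))) by (apply Sm_comp with ef; auto; apply Sm_q2).
  assert (Sf0 : Sm d f0) by apply Sm_f0. assert (Sq2 : Sm d q2) by apply Sm_q2.
  assert (Wm : I 4 (fun q => U1 q - U2 q)).
  { apply I_ext with d (fun q => / 2 * (f0 (t q) - f0 q) - / 2 * (e1 q * e1 q - e2 q * e2 q)); auto.
    - intros q _. unfold U1, U2, e1, e2, t1, t2, f0. field.
    - ilin d. }
  assert (Wp : I 4 (fun q => 2 * a * (U1 q + U2 q) + cub (g1 - h1) (g3 - h3) q)).
  { apply I_ext with d (fun q => ((a * q2 (t q) + b (t q)) - (a * q2 q + bh q)) - a * (e1 q * e1 q + e2 q * e2 q)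
         - (b (t q) - b q) - (b q - cub g1 g3 q) + (bh q - cub h1 h3 q)); auto.
    - intros q _. unfold U1, U2, e1, e2, t1, t2, q2, cub. ring.
    - ilin d. }
  assert (Z0 := near0_0 d Hd).
  assert (A1 := Wm (true :: true :: true :: nil) ltac:(simpl; lia)).
  assert (A2 := Wp (true :: true :: true :: nil) ltac:(simpl; lia)).
  assert (B1 := Wm (false :: false :: false :: nil) ltac:(simpl; lia)).
  assert (B2 := Wp (false :: false :: false :: nil) ltac:(simpl; lia)).
  assert (Sc : Sm d (cub (g1 - h1) (g3 - h3))) by apply Scub.
  rewrite (pDs_minus d U1 U2 SU1 SU2 _ (0,0) Z0) in A1.
  rewrite (pDs_minus d U1 U2 SU1 SU2 _ (0,0) Z0) in B1.
  assert (SUU : Sm d (fun q => 2 * a * (U1 q + U2 q))) by sm.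
  rewrite (pDs_plus d _ _ SUU Sc _ (0,0) Z0) in A2.
  rewrite (pDs_plus d _ _ SUU Sc _ (0,0) Z0) in B2.
  rewrite (pDs_scal (2 * a) (fun q => U1 q + U2 q)) in A2, B2.
  rewrite (pDs_plus d U1 U2 SU1 SU2 _ (0,0) Z0) in A2.
  rewrite (pDs_plus d U1 U2 SU1 SU2 _ (0,0) Z0) in B2.
  unfold U1, U2 in A1, A2, B1, B2.
  rewrite (uuu_fst d e1 Hd Se1), uuu_snd in A1, A2.
  rewrite (vvv_snd d e2 Hd Se2), vvv_fst in B1, B2.
  rewrite cub_uuu in A2. rewrite cub_vvv in B2.
  split; nra.
Qed.

Lemma core (d ef a ah : R) (b c bh ch : R * R -> R) (t : R * R -> R * R) (A : mat3)
  (g1 g3 h1 h3 k1 k3 m1 m3 : R) :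
  0 < d -> 0 < ef -> 0 < a -> 0 < ah ->
  Sm ef b -> Sm ef c -> Sm d bh -> Sm d ch ->
  I 4 (fun p => b p - cub g1 g3 p) -> I 4 (fun p => c p - cub k1 k3 p) ->
  I 4 (fun p => bh p - cub h1 h3 p) -> I 4 (fun p => ch p - cub m1 m3 p) ->
  0 < k1 -> 0 < k3 -> 0 < m1 -> 0 < m3 ->
  Sm d (t1 t) -> Sm d (t2 t) -> maps d ef t -> t (0, 0) = (0, 0) ->
  maps d ef (lin (pD true (t1 t) (0,0)) (pD false (t1 t) (0,0)) (pD true (t2 t) (0,0)) (pD false (t2 t) (0,0))) ->
  pD true (t1 t) (0,0) * pD false (t2 t) (0,0) - pD false (t1 t) (0,0) * pD true (t2 t) (0,0) > 0 ->
  SO3 A ->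
  (forall i, (i < 3)%nat -> I 4 (fun q => Fr A a b c i (t q) - Fh ah bh ch i q)) ->
  is_id3 A /\ a = ah /\ g1 = h1 /\ g3 = h3 /\ k1 = m1 /\ k3 = m3 /\
  pD true (t1 t) (0,0) = 1 /\ pD false (t1 t) (0,0) = 0 /\ pD true (t2 t) (0,0) = 0 /\ pD false (t2 t) (0,0) = 1.
Proof.
  intros Hd Hef Ha Hah Sb Sc Sbh Sch Ib Ic Ibh Ich Hk1 Hk3 Hm1 Hm3 S1 S2 Hm H0 Hml HD HA HJ.
  set (P := pD true (t1 t) (0,0)) in *. set (Q := pD false (t1 t) (0,0)) in *.
  set (Rr := pD true (t2 t) (0,0)) in *. set (S := pD false (t2 t) (0,0)) in *.
  assert (J1 : I 2 (fun q => t1 t q - t1 (lin P Q Rr S) q)).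
  { apply (I2_lin d (t1 t) Hd S1). unfold t1. rewrite H0. reflexivity. }
  assert (J2 : I 2 (fun q => t2 t q - t2 (lin P Q Rr S) q)).
  { apply (I2_lin d (t2 t) Hd S2). unfold t2. rewrite H0. reflexivity. }
  assert (Ibh3 := I3_of_cub d bh h1 h3 Hd Sbh Ibh).
  assert (Ich3 := I3_of_cub d ch m1 m3 Hd Sch Ich).
  assert (Ib3 := I3_of_cub ef b g1 g3 Hef Sb Ib).
  assert (Ic3 := I3_of_cub ef c k1 k3 Hef Sc Ic).
  assert (Sf0 : Sm d f0) by apply Sm_f0. assert (Sq2 : Sm d q2) by apply Sm_q2.
  assert (E0 := row2 d ef a b c t P Q Rr S (A 0%nat 0%nat) (A 0%nat 1%nat) (A 0%nat 2%nat) 1 (-1) (Fh ah bh ch 0)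
     Hd Sb Sc Ib3 Ic3 S1 S2 Hm H0 Hml J1 J2 ltac:(unfold Fh; exact Sf0)
     ltac:(apply (I_zero d); auto; intros q _; unfold Fh, f0; ring)
     ltac:(apply (I_le 4); [exact (HJ 0%nat ltac:(lia)) | lia])).
  assert (E1 := row2 d ef a b c t P Q Rr S (A 1%nat 0%nat) (A 1%nat 1%nat) (A 1%nat 2%nat) ah ah (Fh ah bh ch 1)
     Hd Sb Sc Ib3 Ic3 S1 S2 Hm H0 Hml J1 J2 ltac:(unfold Fh; sm)
     ltac:(apply I_ext with d bh; auto; intros q _; unfold Fh, q2; ring)
     ltac:(apply (I_le 4); [exact (HJ 1%nat ltac:(lia)) | lia])).
  assert (E2 := row2 d ef a b c t P Q Rr S (A 2%nat 0%nat) (A 2%nat 1%nat) (A 2%nat 2%nat) 0 0 (Fh ah bh ch 2)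
     Hd Sb Sc Ib3 Ic3 S1 S2 Hm H0 Hml J1 J2 ltac:(unfold Fh; exact Sch)
     ltac:(apply I_ext with d ch; auto; intros q _; unfold Fh; ring)
     ltac:(apply (I_le 4); [exact (HJ 2%nat ltac:(lia)) | lia])).
  destruct E0 as [E0a [E0b E0c]]. destruct E1 as [E1a [E1b E1c]]. destruct E2 as [E2a [E2b E2c]].
  destruct (alg2 A a ah P Q Rr S Ha Hah HD HA E0a E0b E0c E1a E1b E1c E2a E2b E2c) as [Haa Hcase].
  assert (Hrow2 : A 2%nat 0%nat = 0 /\ A 2%nat 1%nat = 0).
  { destruct Hcase as [[Hid _]|[_ [X [Y _]]]]; auto.
    split; rewrite Hid by lia; reflexivity. }
  destruct Hrow2 as [A20 A21].
  assert (Ic2 : I 4 (fun q => A 2%nat 2%nat * c (t q) - ch q)).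
  { apply I_ext with d (fun q => Fr A a b c 2 (t q) - Fh ah bh ch 2 q); [lra | | apply HJ; lia].
    intros q _. unfold Fr, Fh. rewrite A20, A21. ring.
    }
  destruct (row_c d ef c ch t P Q Rr S (A 2%nat 2%nat) k1 k3 m1 m3 Hd Hef Sc Sch Ic Ich S1 S2 Hm H0 Hml J1 J2 Ic2)
    as [C1 C3].
  destruct Hcase as [[Hid [HQ [HR [HPS HP2]]]] | [A22 [_ [_ [HP [HS HQR]]]]]].
  2:{ exfalso. rewrite A22, HP, HS in *.
      destruct (Rlt_or_le Q 0) as [Qn|Qp]; destruct (Rlt_or_le Rr 0) as [Rn|Rp].
      - nra.
      - assert (0 <= Rr^3) by (apply pow_le; lra). nra.
      - assert (0 <= Q^3) by (apply pow_le; lra). nra.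
      - assert (0 <= Q^3) by (apply pow_le; lra). nra. }
  assert (A22 : A 2%nat 2%nat = 1) by (rewrite Hid by lia; reflexivity).
  rewrite A22, HQ, HR, <- HPS in *.
  assert (P1 : P = 1).
  { destruct (Rlt_or_le P 0) as [Pn|Pp].
    - assert (P * P > 0) by nra.
      assert (P^3 < 0) by (replace (P^3) with (P * (P * P)) by ring; nra).
      assert (k1 * P^3 < 0) by nra. lra.
    - nra. }
  rewrite P1 in *.
  assert (k1 = m1) by nra. assert (k3 = m3) by nra.
  rewrite <- Haa in HJ.
  assert (HR0 : I 4 (fun q => f0 (t q) - f0 q)).
  { apply I_ext with d (fun q => Fr A a b c 0 (t q) - Fh a bh ch 0 q); [lra | | apply HJ; lia].
    intros q _. unfold Fr, Fh. rewrite !Hid by lia. unfold kron; simpl. ring.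
    }
  assert (HR1 : I 4 (fun q => (a * q2 (t q) + b (t q)) - (a * q2 q + bh q))).
  { apply I_ext with d (fun q => Fr A a b c 1 (t q) - Fh a bh ch 1 q); [lra | | apply HJ; lia].
    intros q _. unfold Fr, Fh. rewrite !Hid by lia. unfold kron; simpl. ring.
    }
  destruct (row_b d ef a b bh t g1 g3 h1 h3 Hd Hef Sb Sbh Ib Ibh S1 S2 Hm H0 Hml J1 J2 HR0 HR1) as [G1 G3].
  repeat split; auto.
Qed.

Lemma higher (d ef a : R) (b : R * R -> R) (t : R * R -> R * R) :
  0 < d -> 0 < ef -> 0 < a -> Sm ef b -> I 3 b ->
  Sm d (t1 t) -> Sm d (t2 t) -> maps d ef t -> t (0, 0) = (0, 0) -> maps d ef (fun q => q) ->
  (forall k, I k (fun q => f0 (t q) - f0 q)) ->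
  (forall k, I k (fun q => (a * q2 (t q) + b (t q)) - (a * q2 q + b q))) ->
  I 2 (fun q => t1 t q - fst q) -> I 2 (fun q => t2 t q - snd q) ->
  forall k, (2 <= k)%nat -> I k (fun q => t1 t q - fst q) /\ I k (fun q => t2 t q - snd q).
Proof.
  intros Hd Hef Ha Sb Ib S1 S2 Hm H0 Hmi R0 R1 J1 J2 k Hk.
  induction Hk as [|k Hk IH]; [split; auto|].
  destruct IH as [K1 K2].
  set (e1 := fun q => t1 t q - fst q) in *. set (e2 := fun q => t2 t q - snd q) in *.
  assert (Se1 : Sm d e1) by (unfold e1; sm). assert (Se2 : Sm d e2) by (unfold e2; sm).
  assert (I11 : I (k + 2) (fun q => e1 q * e1 q)) by (apply (I_mult d Hd (k + 2) e1 e1 k k); auto; lia).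
  assert (I22 : I (k + 2) (fun q => e2 q * e2 q)) by (apply (I_mult d Hd (k + 2) e2 e2 k k); auto; lia).
  assert (Sid1 : Sm d (t1 (fun q => q))) by (unfold t1; sm).
  assert (Sid2 : Sm d (t2 (fun q => q))) by (unfold t2; sm).
  assert (Sbt : Sm d (fun q => b (t q))) by (apply Sm_comp with ef; auto).
  assert (Sbd : Sm d (fun q => b q)) by (apply (Sm_comp ef d b (fun q => q)); auto).
  assert (Kb : I (k + 2) (fun q => b (t q) - b q)).
  { apply (I_compdiff ef d t (fun q => q) Hd Hm Hmi S1 S2 Sid1 Sid2 H0 eq_refl k ltac:(lia) K1 K2 (k + 2) b 3 Sb Ib ltac:(lia)). }
  assert (Sf0t : Sm d (fun q => f0 (t q))) by (apply Sm_comp with ef; auto; apply Sm_f0).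
  assert (Sq2t : Sm d (fun q => q2 (t q))) by (apply Sm_comp with ef; auto; apply Sm_q2).
  assert (Sf0 : Sm d f0) by apply Sm_f0. assert (Sq2 : Sm d q2) by apply Sm_q2.
  assert (R0k := R0 (k + 2)%nat). assert (R1k := R1 (k + 2)%nat).
  assert (U1 : I (S (S k)) (fun q => fst q * e1 q)).
  { replace (S (S k)) with (k + 2)%nat by lia.
    apply I_ext with d (fun q => / (4 * a) * (a * (f0 (t q) - f0 q) + ((a * q2 (t q) + b (t q)) - (a * q2 q + b q))
          - 2 * a * (e1 q * e1 q) - (b (t q) - b q))); auto.
    - intros q _. unfold e1, t1, f0, q2. field. lra.
    - ilin d. }
  assert (U2 : I (S (S k)) (fun q => snd q * e2 q)).
  { replace (S (S k)) with (k + 2)%nat by lia.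
    apply I_ext with d (fun q => / (4 * a) * (((a * q2 (t q) + b (t q)) - (a * q2 q + b q)) - a * (f0 (t q) - f0 q)
          - 2 * a * (e2 q * e2 q) - (b (t q) - b q))); auto.
    - intros q _. unfold e2, t2, f0, q2. field. lra.
    - ilin d. }
  split; [apply (div_fst d (S k) e1 Hd Se1 U1) | apply (div_snd d (S k) e2 Hd Se2 U2)].
Qed.

Lemma cont_small (h : R * R -> R) r : continuous h (0, 0) -> h (0, 0) = 0 -> 0 < r ->
  exists del, 0 < del /\ forall q, near0 del q -> Rabs (h q) < r.
Proof.
  intros Hc H0 Hr.
  assert (L : locally (h (0, 0)) (fun y : R => Rabs y < r)).
  { exists (mkposreal r Hr). intros y Hy. apply ball_R in Hy. rewrite H0 in Hy. simpl in Hy.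
    rewrite Rminus_0_r in Hy. exact Hy. }
  specialize (Hc _ L). destruct Hc as [eps Heps].
  exists eps. split; [apply cond_pos|]. intros [x y] [Hx Hy]. apply Heps. simpl in *.
  split; simpl; apply ball_R'; rewrite Rminus_0_r; assumption.
Qed.

Lemma lin_maps ef d l1 l2 l3 l4 : 0 < d ->
  d * (1 + Rabs l1 + Rabs l2 + Rabs l3 + Rabs l4) <= ef -> maps d ef (lin l1 l2 l3 l4).
Proof.
  intros Hd Hle q [Hu Hv]. unfold lin; split; simpl.
  - eapply Rle_lt_trans; [apply Rabs_triang|]. rewrite !Rabs_mult.
    pose proof (Rabs_pos l1). pose proof (Rabs_pos l2). pose proof (Rabs_pos l3). pose proof (Rabs_pos l4).
    pose proof (Rabs_pos (fst q)). pose proof (Rabs_pos (snd q)). nra.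
  - eapply Rle_lt_trans; [apply Rabs_triang|]. rewrite !Rabs_mult.
    pose proof (Rabs_pos l1). pose proof (Rabs_pos l2). pose proof (Rabs_pos l3). pose proof (Rabs_pos l4).
    pose proof (Rabs_pos (fst q)). pose proof (Rabs_pos (snd q)). nra.
Qed.

Lemma jet_to_I d r G H : 0 < d -> Sm d G -> Sm d H -> jet_eq r G H -> I (S r) (fun q => G q - H q).
Proof.
  intros Hd SG SH J ds Hl. rewrite (pDs_minus d G H SG SH ds (0,0) (near0_0 d Hd)).
  rewrite J by lia. ring.
Qed.

Lemma I_to_jet d r G H : 0 < d -> Sm d G -> Sm d H -> I (S r) (fun q => G q - H q) -> jet_eq r G H.
Proof.
  intros Hd SG SH J ds Hl. pose proof (J ds ltac:(lia)) as K.
  rewrite (pDs_minus d G H SG SH ds (0,0) (near0_0 d Hd)) in K. lra.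
Qed.

Lemma I1_const_diff e (phi : R * R -> R) : 0 < e -> Sm e phi -> I 1 (fun p => phi p - phi (0, 0)).
Proof.
  intros He Hp. apply I_S_intro; [ring | intros; apply I_0].
Qed.

Lemma I4_nf e (p1 p3 : R -> R) (p2 : R * R -> R) : 0 < e ->
  Sm e (fun p => p1 (fst p)) -> Sm e p2 -> Sm e (fun p => p3 (snd p)) ->
  I 4 (fun p => (fst p ^ 3 * p1 (fst p) + fst p ^ 2 * snd p ^ 2 * p2 p + snd p ^ 3 * p3 (snd p)) - cub (p1 0) (p3 0) p).
Proof.
  intros He S1 S2 S3.
  assert (Ic1 : I 1 (fun p => p1 (fst p) - p1 0)).
  { apply I_S_intro; [simpl; ring | intros; apply I_0]. }
  assert (Ic3 : I 1 (fun p => p3 (snd p) - p3 0)).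
  { apply I_S_intro; [simpl; ring | intros; apply I_0]. }
  assert (Iu3 : I 3 (fun p => fst p ^ 3)) by (apply (I_pow e 1 fst 3 He (Sm_fst e) I_fst)).
  assert (Iv3 : I 3 (fun p => snd p ^ 3)) by (apply (I_pow e 1 snd 3 He (Sm_snd e) I_snd)).
  assert (Iu2 : I 2 (fun p => fst p ^ 2)) by (apply (I_pow e 1 fst 2 He (Sm_fst e) I_fst)).
  assert (Iv2 : I 2 (fun p => snd p ^ 2)) by (apply (I_pow e 1 snd 2 He (Sm_snd e) I_snd)).
  assert (Iuv : I 4 (fun p => fst p ^ 2 * snd p ^ 2)) by (apply (I_mult e He 4 _ _ 2 2); try sm; auto).
  assert (T1 : I 4 (fun p => fst p ^ 3 * (p1 (fst p) - p1 0))) by (apply (I_mult e He 4 _ _ 3 1); try sm; auto).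
  assert (T2 : I 4 (fun p => fst p ^ 2 * snd p ^ 2 * p2 p)) by (apply (I_mult e He 4 _ _ 4 0); try sm; auto; apply I_0).
  assert (T3 : I 4 (fun p => snd p ^ 3 * (p3 (snd p) - p3 0))) by (apply (I_mult e He 4 _ _ 3 1); try sm; auto).
  apply I_ext with e (fun p => fst p ^ 3 * (p1 (fst p) - p1 0) + fst p ^ 2 * snd p ^ 2 * p2 p + snd p ^ 3 * (p3 (snd p) - p3 0)); auto.
  - intros q _. unfold cub. ring.
  - ilin e.
Qed.

Ltac lemin := first [apply Rle_refl
  | eapply Rle_trans; [apply Rmin_l | lemin]
  | eapply Rle_trans; [apply Rmin_r | lemin]].
Ltac minpos := repeat (apply Rmin_pos); auto.

Theorem theorem2 :
  forall (a : R) (b1 : R -> R) (b2 : R * R -> R) (b3 : R -> R)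
         (c1 : R -> R) (c2 : R * R -> R) (c3 : R -> R)
         (ha : R) (hb1 : R -> R) (hb2 : R * R -> R) (hb3 : R -> R)
         (hc1 : R -> R) (hc2 : R * R -> R) (hc3 : R -> R)
         (s t : R * R -> R * R) (A : mat3),
    nf_data a b1 b2 b3 c1 c2 c3 ->
    nf_data ha hb1 hb2 hb3 hc1 hc2 hc3 ->
    diffeo_germ s t ->
    orientation_preserving s ->
    SO3 A ->
    (* (i) *)
    (jet_eq3 3 (comp3 (mact A (nf a b1 b2 b3 c1 c2 c3)) t)
               (nf ha hb1 hb2 hb3 hc1 hc2 hc3) ->
       a = ha /\ b1 0 = hb1 0 /\ b3 0 = hb3 0 /\ c1 0 = hc1 0 /\ c3 0 = hc3 0 /\
       jet_eq3 3 (nf a b1 b2 b3 c1 c2 c3) (nf ha hb1 hb2 hb3 hc1 hc2 hc3))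
    /\
    (* (ii) *)
    (germ_eq3 (comp3 (mact A (nf a b1 b2 b3 c1 c2 c3)) t) (nf a b1 b2 b3 c1 c2 c3) ->
       is_id3 A /\
       forall r : nat, (1 <= r)%nat ->
         jet_eq r (fun p => fst (s p)) fst /\ jet_eq r (fun p => snd (s p)) snd).
Proof.
  intros a b1 b2 b3 c1 c2 c3 ha hb1 hb2 hb3 hc1 hc2 hc3 s t A Hf Hfh Hdiff Hor HA.
  destruct Hf as [sb1 [sb3 [sc1 [sc3 [sb2 [sc2 [Ha [Hc1 Hc3]]]]]]]].
  destruct Hfh as [hsb1 [hsb3 [hsc1 [hsc3 [hsb2 [hsc2 [Hha [Hhc1 Hhc3]]]]]]]].
  apply smooth1_Sm_fst in sb1 as [e1 [He1 Sb1]]. apply smooth1_Sm_snd in sb3 as [e3 [He3 Sb3]].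
  apply smooth1_Sm_fst in sc1 as [e4 [He4 Sc1]]. apply smooth1_Sm_snd in sc3 as [e6 [He6 Sc3]].
  destruct sb2 as [e2 [He2 Sb2]]. change (Sm e2 b2) in Sb2.
  destruct sc2 as [e5 [He5 Sc2]]. change (Sm e5 c2) in Sc2.
  apply smooth1_Sm_fst in hsb1 as [f1 [Hf1 Hb1]]. apply smooth1_Sm_snd in hsb3 as [f3 [Hf3 Hb3]].
  apply smooth1_Sm_fst in hsc1 as [f4 [Hf4 Hc1']]. apply smooth1_Sm_snd in hsc3 as [f6 [Hf6 Hc3']].
  destruct hsb2 as [f2 [Hf2 Hb2]]. change (Sm f2 hb2) in Hb2.
  destruct hsc2 as [f5 [Hf5 Hc2']]. change (Sm f5 hc2) in Hc2'.
  set (ef := Rmin (Rmin (Rmin e1 e2) (Rmin e3 e4)) (Rmin (Rmin e5 e6) (Rmin (Rmin f1 f2) (Rmin (Rmin f3 f4) (Rmin f5 f6))))).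
  assert (Hef : 0 < ef) by (unfold ef; minpos).
  apply (Sm_mono _ ef) in Sb1; [|unfold ef; lemin]. apply (Sm_mono _ ef) in Sb2; [|unfold ef; lemin].
  apply (Sm_mono _ ef) in Sb3; [|unfold ef; lemin]. apply (Sm_mono _ ef) in Sc1; [|unfold ef; lemin].
  apply (Sm_mono _ ef) in Sc2; [|unfold ef; lemin]. apply (Sm_mono _ ef) in Sc3; [|unfold ef; lemin].
  apply (Sm_mono _ ef) in Hb1; [|unfold ef; lemin]. apply (Sm_mono _ ef) in Hb2; [|unfold ef; lemin].
  apply (Sm_mono _ ef) in Hb3; [|unfold ef; lemin]. apply (Sm_mono _ ef) in Hc1'; [|unfold ef; lemin].
  apply (Sm_mono _ ef) in Hc2'; [|unfold ef; lemin]. apply (Sm_mono _ ef) in Hc3'; [|unfold ef; lemin].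
  clearbody ef.
  set (b := fun p : R * R => fst p ^ 3 * b1 (fst p) + fst p ^ 2 * snd p ^ 2 * b2 p + snd p ^ 3 * b3 (snd p)).
  set (c := fun p : R * R => fst p ^ 3 * c1 (fst p) + fst p ^ 2 * snd p ^ 2 * c2 p + snd p ^ 3 * c3 (snd p)).
  set (bh := fun p : R * R => fst p ^ 3 * hb1 (fst p) + fst p ^ 2 * snd p ^ 2 * hb2 p + snd p ^ 3 * hb3 (snd p)).
  set (ch := fun p : R * R => fst p ^ 3 * hc1 (fst p) + fst p ^ 2 * snd p ^ 2 * hc2 p + snd p ^ 3 * hc3 (snd p)).
  assert (Sb : Sm ef b) by (unfold b; sm). assert (Sc : Sm ef c) by (unfold c; sm).
  assert (Sbh : Sm ef bh) by (unfold bh; sm). assert (Sch : Sm ef ch) by (unfold ch; sm).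
  assert (Ib : I 4 (fun p => b p - cub (b1 0) (b3 0) p)) by (apply (I4_nf ef); auto).
  assert (Ic : I 4 (fun p => c p - cub (c1 0) (c3 0) p)) by (apply (I4_nf ef); auto).
  assert (Ibh : I 4 (fun p => bh p - cub (hb1 0) (hb3 0) p)) by (apply (I4_nf ef); auto).
  assert (Ich : I 4 (fun p => ch p - cub (hc1 0) (hc3 0) p)) by (apply (I4_nf ef); auto).
  destruct Hdiff as [Hs0 [Ss1 [Ss2 [St1 [St2 [eps0 [Heps0 Hinv]]]]]]].
  destruct Ss1 as [es1 [Hes1 Ss1]]. change (Sm es1 (t1 s)) in Ss1.
  destruct Ss2 as [es2 [Hes2 Ss2]]. change (Sm es2 (t2 s)) in Ss2.
  destruct St1 as [et1 [Het1 St1]]. change (Sm et1 (t1 t)) in St1.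
  destruct St2 as [et2 [Het2 St2]]. change (Sm et2 (t2 t)) in St2.
  set (es := Rmin es1 es2). assert (Hes : 0 < es) by (unfold es; minpos).
  apply (Sm_mono _ es) in Ss1; [|unfold es; lemin]. apply (Sm_mono _ es) in Ss2; [|unfold es; lemin].
  clearbody es.
  assert (Ht0 : t (0, 0) = (0, 0)).
  { destruct (Hinv (0, 0) (near0_0 eps0 Heps0)) as [E _]. rewrite Hs0 in E. exact E. }
  set (ebig := Rmin ef es). assert (Hebig : 0 < ebig) by (unfold ebig; minpos).
  assert (Ct1 : continuous (t1 t) (0, 0)).
  { destruct (St1 nil (0, 0) (near0_0 et1 Het1)) as [_ [_ K]]. exact K. }
  assert (Ct2 : continuous (t2 t) (0, 0)).
  { destruct (St2 nil (0, 0) (near0_0 et2 Het2)) as [_ [_ K]]. exact K. }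
  destruct (cont_small (t1 t) ebig Ct1 ltac:(unfold t1; rewrite Ht0; reflexivity) Hebig) as [del1 [Hdel1 D1]].
  destruct (cont_small (t2 t) ebig Ct2 ltac:(unfold t2; rewrite Ht0; reflexivity) Hebig) as [del2 [Hdel2 D2]].
  set (P := pD true (t1 t) (0, 0)). set (Q := pD false (t1 t) (0, 0)).
  set (Rr := pD true (t2 t) (0, 0)). set (Sv := pD false (t2 t) (0, 0)).
  set (N := 1 + Rabs P + Rabs Q + Rabs Rr + Rabs Sv).
  assert (HN : 1 <= N) by (unfold N; pose proof (Rabs_pos P); pose proof (Rabs_pos Q);
    pose proof (Rabs_pos Rr); pose proof (Rabs_pos Sv); lra).
  set (d := Rmin (Rmin (Rmin et1 et2) eps0) (Rmin (Rmin del1 del2) (ebig / N))).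
  assert (HebN : 0 < ebig / N) by (apply Rdiv_lt_0_compat; lra).
  assert (Hd : 0 < d) by (unfold d; minpos).
  assert (dN : d * N <= ebig).
  { assert (d <= ebig / N) by (unfold d; lemin).
    apply Rmult_le_compat_r with (r := N) in H; [|lra]. unfold Rdiv in H.
    rewrite Rmult_assoc, Rinv_l in H; lra. }
  assert (d_ebig : d <= ebig) by nra.
  assert (d_ef : d <= ef) by (assert (ebig <= ef) by (unfold ebig; lemin); lra).
  assert (d_es : d <= es) by (assert (ebig <= es) by (unfold ebig; lemin); lra).
  assert (d_eps0 : d <= eps0) by (unfold d; lemin).
  assert (d_del1 : d <= del1) by (unfold d; lemin). assert (d_del2 : d <= del2) by (unfold d; lemin).
  apply (Sm_mono _ d) in St1; [|unfold d; lemin]. apply (Sm_mono _ d) in St2; [|unfold d; lemin].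
  assert (Mt : forall e', ebig <= e' -> maps d e' t).
  { intros e' He' q Hq. split.
    - pose proof (D1 q (near0_mono d del1 q d_del1 Hq)). unfold t1 in H. lra.
    - pose proof (D2 q (near0_mono d del2 q d_del2 Hq)). unfold t2 in H. lra. }
  assert (Mtf : maps d ef t) by (apply Mt; unfold ebig; lemin).
  assert (Mts : maps d es t) by (apply Mt; unfold ebig; lemin).
  assert (Mlin : maps d ef (lin P Q Rr Sv)).
  { apply lin_maps; auto. fold N. assert (ebig <= ef) by (unfold ebig; lemin). lra. }
  assert (Mid : forall e', d <= e' -> maps d e' (fun q => q)).
  { intros e' He' q Hq. apply near0_mono with d; auto. }
  assert (Ssd1 : Sm d (t1 s)) by (apply (Sm_mono es); auto).
  assert (Ssd2 : Sm d (t2 s)) by (apply (Sm_mono es); auto).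
  assert (Z0 := near0_0 d Hd).
  assert (Inv : forall q, near0 d q -> s (t q) = q).
  { intros q Hq. apply Hinv. apply near0_mono with d; auto. }
  assert (Ch : forall (g : R * R -> R) (bb : bool) (h : R * R -> R), Sm es g -> onB d (fun q => g (t q)) h ->
     pD bb h (0, 0) = pD true g (0, 0) * pD bb (t1 t) (0, 0) + pD false g (0, 0) * pD bb (t2 t) (0, 0)).
  { intros g bb h Sg Hgh. rewrite <- (pD_ext d bb _ _ Hgh (0,0) Z0).
    rewrite (pD_comp es d g t (0,0) bb Sg Mts Z0 St1 St2). rewrite Ht0. reflexivity. }
  assert (O1 := Ch (t1 s) true fst Ss1 ltac:(intros q Hq; unfold t1; rewrite Inv; auto)).
  assert (O2 := Ch (t1 s) false fst Ss1 ltac:(intros q Hq; unfold t1; rewrite Inv; auto)).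
  assert (O3 := Ch (t2 s) true snd Ss2 ltac:(intros q Hq; unfold t2; rewrite Inv; auto)).
  assert (O4 := Ch (t2 s) false snd Ss2 ltac:(intros q Hq; unfold t2; rewrite Inv; auto)).
  rewrite pD_fst_t in O1. rewrite pD_fst_f in O2. rewrite pD_snd_t in O3. rewrite pD_snd_f in O4.
  fold P Q Rr Sv in O1, O2, O3, O4.
  unfold orientation_preserving in Hor. cbv zeta in Hor. change (fun p => fst (s p)) with (t1 s) in Hor.
  change (fun p => snd (s p)) with (t2 s) in Hor.
  assert (HD : P * Sv - Q * Rr > 0).
  { set (al := pD true (t1 s) (0, 0)) in *. set (be := pD false (t1 s) (0, 0)) in *.
    set (ga := pD true (t2 s) (0, 0)) in *. set (de := pD false (t2 s) (0, 0)) in *.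
    assert (E : (al * de - be * ga) * (P * Sv - Q * Rr) = 1).
    { transitivity ((al * P + be * Rr) * (ga * Q + de * Sv) - (al * Q + be * Sv) * (ga * P + de * Rr)); [ring|].
      rewrite <- O1, <- O2, <- O3, <- O4. ring. }
    nra. }
  assert (Sf0 : Sm ef f0) by apply Sm_f0. assert (Sq2 : Sm ef q2) by apply Sm_q2.
  assert (Sf0d : Sm d f0) by apply Sm_f0. assert (Sq2d : Sm d q2) by apply Sm_q2.
  assert (Sbd : Sm d b) by (apply (Sm_mono ef); auto). assert (Scd : Sm d c) by (apply (Sm_mono ef); auto).
  assert (Sbhd : Sm d bh) by (apply (Sm_mono ef); auto). assert (Schd : Sm d ch) by (apply (Sm_mono ef); auto).
  assert (SG : forall i, Sm d (fun q => Fr A a b c i (t q))).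
  { intros i. apply (Sm_comp ef d (Fr A a b c i) t Mtf); auto. unfold Fr; sm. }
  assert (SH : forall i, Sm d (Fh ha bh ch i)).
  { intros i. destruct i as [|[|i]]; unfold Fh; sm. }
  assert (SH' : forall i, Sm d (Fh a b c i)).
  { intros i. destruct i as [|[|i]]; unfold Fh; sm. }
  split.
  -
    intros Hjet.
    assert (HJ : forall i, (i < 3)%nat -> I 4 (fun q => Fr A a b c i (t q) - Fh ha bh ch i q)).
    { intros i Hi. destruct i as [|[|[|i]]]; try lia.
      - exact (jet_to_I d 3 (fun q => Fr A a b c 0 (t q)) (Fh ha bh ch 0) Hd (SG 0%nat) (SH 0%nat) (Hjet 0%nat Hi)).
      - exact (jet_to_I d 3 (fun q => Fr A a b c 1 (t q)) (Fh ha bh ch 1) Hd (SG 1%nat) (SH 1%nat) (Hjet 1%nat Hi)).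
      - exact (jet_to_I d 3 (fun q => Fr A a b c 2 (t q)) (Fh ha bh ch 2) Hd (SG 2%nat) (SH 2%nat) (Hjet 2%nat Hi)). }
    destruct (core d ef a ha b c bh ch t A (b1 0) (b3 0) (hb1 0) (hb3 0) (c1 0) (c3 0) (hc1 0) (hc3 0)
      Hd Hef Ha Hha Sb Sc Sbhd Schd Ib Ic Ibh Ich Hc1 Hc3 Hhc1 Hhc3 St1 St2 Mtf Ht0 Mlin HD HA HJ)
      as [Hid [Haa [G1 [G3 [K1 [K3 _]]]]]].
    split; auto. split; auto. split; auto. split; auto. split; auto.
    intros i Hi. destruct i as [|[|[|i]]]; try lia.
    + intros ds _. reflexivity.
    + change (jet_eq 3 (fun q => a * q2 q + b q) (fun q => ha * q2 q + bh q)).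
      apply (I_to_jet d); [lra | sm | sm |].
      assert (Scb : forall x y, Sm d (cub x y)) by (intros; apply Sm_cub).
      assert (S1' : Sm d (cub (b1 0) (b3 0))) by apply Scb. assert (S2' : Sm d (cub (hb1 0) (hb3 0))) by apply Scb.
      apply I_ext with d (fun q => (b q - cub (b1 0) (b3 0) q) - (bh q - cub (hb1 0) (hb3 0) q)); auto.
      * intros q _. rewrite <- Haa, <- G1, <- G3. unfold cub. ring.
      * ilin d.
    + change (jet_eq 3 c ch).
      apply (I_to_jet d); [lra | sm | sm |].
      assert (Scb : forall x y, Sm d (cub x y)) by (intros; apply Sm_cub).
      assert (S1' : Sm d (cub (c1 0) (c3 0))) by apply Scb. assert (S2' : Sm d (cub (hc1 0) (hc3 0))) by apply Scb.
      apply I_ext with d (fun q => (c q - cub (c1 0) (c3 0) q) - (ch q - cub (hc1 0) (hc3 0) q)); auto.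
      * intros q _. rewrite <- K1, <- K3. unfold cub. ring.
      * ilin d.
  -
    intros Hgerm.
    assert (HJ2 : forall k i, (i < 3)%nat -> I k (fun q => Fr A a b c i (t q) - Fh a b c i q)).
    { intros k i Hi. destruct (Hgerm i Hi) as [eg [Heg Hg]]. apply (I_zero eg); auto.
      intros q Hq. specialize (Hg q Hq). destruct i as [|[|[|i]]]; try lia.
      - change (Fr A a b c 0 (t q) = Fh a b c 0 q) in Hg. lra.
      - change (Fr A a b c 1 (t q) = Fh a b c 1 q) in Hg. lra.
      - change (Fr A a b c 2 (t q) = Fh a b c 2 q) in Hg. lra. }
    destruct (core d ef a a b c b c t A (b1 0) (b3 0) (b1 0) (b3 0) (c1 0) (c3 0) (c1 0) (c3 0)
      Hd Hef Ha Ha Sb Sc Sbd Scd Ib Ic Ib Ic Hc1 Hc3 Hc1 Hc3 St1 St2 Mtf Ht0 Mlin HD HA (fun i Hi => HJ2 4%nat i Hi))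
      as [Hid [_ [_ [_ [_ [_ [P1 [Q0 [R0 S1']]]]]]]]].
    split; [exact Hid|]. intros r Hr.
    assert (R0k : forall k, I k (fun q => f0 (t q) - f0 q)).
    { intros k. apply I_ext with d (fun q => Fr A a b c 0 (t q) - Fh a b c 0 q); [lra | | apply HJ2; lia].
      intros q _. unfold Fr, Fh. rewrite !Hid by lia. unfold kron; simpl. ring. }
    assert (R1k : forall k, I k (fun q => (a * q2 (t q) + b (t q)) - (a * q2 q + b q))).
    { intros k. apply I_ext with d (fun q => Fr A a b c 1 (t q) - Fh a b c 1 q); [lra | | apply HJ2; lia].
      intros q _. unfold Fr, Fh. rewrite !Hid by lia. unfold kron; simpl. ring. }
    assert (J1 : I 2 (fun q => t1 t q - fst q)).
    { apply I_ext with d (fun q => t1 t q - (P * fst q + Q * snd q)); auto.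
      - intros q _. fold P in P1. fold Q in Q0. rewrite P1, Q0. ring.
      - apply (I2_lin d (t1 t) Hd St1). unfold t1. rewrite Ht0. reflexivity. }
    assert (J2 : I 2 (fun q => t2 t q - snd q)).
    { apply I_ext with d (fun q => t2 t q - (Rr * fst q + Sv * snd q)); auto.
      - intros q _. fold Rr in R0. fold Sv in S1'. rewrite R0, S1'. ring.
      - apply (I2_lin d (t2 t) Hd St2). unfold t2. rewrite Ht0. reflexivity. }
    assert (Ib3 := I3_of_cub ef b (b1 0) (b3 0) Hef Sb Ib).
    destruct (higher d ef a b t Hd Hef Ha Sb Ib3 St1 St2 Mtf Ht0 (Mid ef d_ef) R0k R1k J1 J2 (S r) ltac:(lia))
      as [K1 K2].
    assert (Sid1 : Sm d (t1 (fun q => q))) by (unfold t1; sm).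
    assert (Sid2 : Sm d (t2 (fun q => q))) by (unfold t2; sm).
    assert (Is1 : I 1 (t1 s)) by (apply I_S_intro; [unfold t1; rewrite Hs0; reflexivity | intros; apply I_0]).
    assert (Is2 : I 1 (t2 s)) by (apply I_S_intro; [unfold t2; rewrite Hs0; reflexivity | intros; apply I_0]).
    assert (D1' := I_compdiff es d t (fun q => q) Hd Mts (Mid es d_es) St1 St2 Sid1 Sid2 Ht0 eq_refl (S r) ltac:(lia) K1 K2
                    (S r) (t1 s) 1 Ss1 Is1 ltac:(lia)).
    assert (D2' := I_compdiff es d t (fun q => q) Hd Mts (Mid es d_es) St1 St2 Sid1 Sid2 Ht0 eq_refl (S r) ltac:(lia) K1 K2
                    (S r) (t2 s) 1 Ss2 Is2 ltac:(lia)).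
    assert (Sst1 : Sm d (fun q => t1 s (t q))) by (apply (Sm_comp es d (t1 s) t); auto).
    assert (Sst2 : Sm d (fun q => t2 s (t q))) by (apply (Sm_comp es d (t2 s) t); auto).
    assert (Sfd : Sm d fst) by apply Sm_fst. assert (Ssd : Sm d snd) by apply Sm_snd.
    split.
    + apply (I_to_jet d r (t1 s) fst Hd Ssd1 Sfd).
      apply I_ext with d (fun q => (t1 s (t q) - fst q) - (t1 s (t q) - t1 s q)); auto.
      * intros q _. ring.
      * apply (I_minus d); auto; try sm.
        apply (I_zero d); auto. intros q Hq. unfold t1. rewrite Inv; auto. ring.
    + apply (I_to_jet d r (t2 s) snd Hd Ssd2 Ssd).
      apply I_ext with d (fun q => (t2 s (t q) - snd q) - (t2 s (t q) - t2 s q)); auto.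
      * intros q _. ring.
      * apply (I_minus d); auto; try sm.
        apply (I_zero d); auto. intros q Hq. unfold t2. rewrite Inv; auto. ring.
Qed.
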